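(* Let $\mathcal P(\boldsymbol\alpha,\boldsymbol\ell)$ be a curvilinear polygon with $n$ vertices. Then $\sigma\ge0$ is a quasi-eigenvalue of $\mathcal P$ if and only if $F^{\mathcal P}(\boldsymbol\alpha,\boldsymbol\ell,\sigma)=0$, where $$F^{\mathcal P}(\boldsymbol\alpha,\boldsymbol\ell,\sigma)=\sum_{\substack{\boldsymbol\zeta\in\{\pm1\}^n\\ \zeta_1=1}}\mathfrak p_{\boldsymbol\zeta}(\boldsymbol\alpha)\cos(\boldsymbol\ell\cdot\boldsymbol\zeta\,\sigma)-\prod_{j=1}^n\sin\Big(\frac{\pi^2}{2\alpha_j}\Big).$$ Moreover, the multiplicity of a quasi-eigenvalue $\sigma>0$ equals its multiplicity as a root of $F^{\mathcal P}(\boldsymbol\alpha,\boldsymbol\ell,\cdot)$, and the multiplicity of the quasi-eigenvalue $\sigma=0$ equals half its multiplicity as a root of $F^{\mathcal P}(\boldsymbol\alpha,\boldsymbol\ell,\cdot)$.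
   Context: For $\boldsymbol\zeta=(\zeta_1,\dots,\zeta_n)\in\{\pm1\}^n$ with cyclic convention $\zeta_{n+1}=\zeta_1$, let $\mathrm{ch}(\boldsymbol\zeta)=\{j\in\{1,\dots,n\}:\zeta_j\ne\zeta_{j+1}\}$ and $\mathfrak p_{\boldsymbol\zeta}(\boldsymbol\alpha)=\prod_{j\in\mathrm{ch}(\boldsymbol\zeta)}\cos(\pi^2/(2\alpha_j))$ (empty product $=1$); $\boldsymbol\ell\cdot\boldsymbol\zeta=\sum_j\ell_j\zeta_j$. A curvilinear polygon $\mathcal P(\boldsymbol\alpha,\boldsymbol\ell)$: bounded simply connected planar domain with boundary a closed non-self-intersecting curve of $n$ smooth arcs $I_1,\dots,I_n$, vertices $V_1,\dots,V_n$ clockwise (cyclic indices), $I_j$ joins $V_{j-1},V_j$, length $\ell_j>0$, interior angle $\alpha_j\in(0,\pi)$ at $V_j$. $\mathcal E=\{\pi/(2k):k\in\mathbb N\}$, $\mathcal O(\pi/(2k))=(-1)^k$. For $\alpha\notin\mathcal E$, $\mathtt A(\alpha)=\begin{pmatrix}\csc\frac{\pi^2}{2\alpha}&-i\cot\frac{\pi^2}{2\alpha}\\ i\cot\frac{\pi^2}{2\alpha}&\csc\frac{\pi^2}{2\alpha}\end{pmatrix}$; $\mathtt B(\ell,\sigma)=\operatorname{diag}(e^{i\ell\sigma},e^{-i\ell\sigma})$. Quasi-eigenvalues: if no angle is in $\mathcal E$, $\sigma\ge0$ is a quasi-eigenvalue iff $1$ is an eigenvalue of $\mathtt T(\sigma)=\mathtt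 A(\alpha_n)\mathtt B(\ell_n,\sigma)\cdots\mathtt A(\alpha_1)\mathtt B(\ell_1,\sigma)$; multiplicity of $\sigma>0$ is the geometric multiplicity of that eigenvalue, multiplicity of $0$ is $1$. Otherwise, with exceptional vertices $V_{E_1},\dots,V_{E_K}$, $1\le E_1<\dots<E_K=n$, $E_0:=E_K$, set $\mathtt U_\kappa(\sigma)=\mathtt B(\ell_{E_\kappa},\sigma)\mathtt A(\alpha_{E_\kappa-1})\mathtt B(\ell_{E_\kappa-1},\sigma)\cdots\mathtt A(\alpha_{E_{\kappa-1}+1})\mathtt B(\ell_{E_{\kappa-1}+1},\sigma)$ (indices mod $n$), $\mathbf X_{\rm even}=\frac1{\sqrt2}(e^{-i\pi/4},e^{i\pi/4})^T$, $\mathbf X_{\rm odd}=\frac1{\sqrt2}(e^{i\pi/4},e^{-i\pi/4})^T$, $\mathbf X(\alpha)=\mathbf X_{\rm even}$ if $\mathcal O(\alpha)=1$, else $\mathbf X_{\rm odd}$; $u\cdot v=u_1\bar v_1+u_2\bar v_2$. Then $\sigma\ge0$ is a quasi-eigenvalue iff $\mathtt U_\kappa(\sigma)\mathbf X(\alpha_{E_{\kappa-1}})\cdot\mathbf X(\alpha_{E_\kappa})=0$ for some $\kappa$; multiplicity of $\sigma>0$ is the number of such $\kappa$, and of $\sigma=0$ is half the number of $\kappa$ with $\mathcal O(\alpha_{E_{\kappa-1}})\neq\mathcal O(\alpha_{E_\kappa})$. *)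

(* Defs.v *)
From Stdlib Require Import Reals Lra Lia List Arith Bool.
From Stdlib Require Import ClassicalDescription.
Import ListNotations.
Open Scope R_scope.

Definition decP (P : Prop) : bool :=
  if excluded_middle_informative P then true else false.

(** Cyclic indices: vertices/arcs are numbered 1..n, index j is read mod n
    in {1,..,n}; e.g. wrap n 0 = n, wrap n (n+1) = 1. *)
Definition wrap (n j : nat) : nat := S ((j + n - 1) mod n).

Definition sum1n (n : nat) (f : nat -> R) : R := fold_right Rplus 0 (map f (seq 1 n)).
Definition prod1n (n : nat) (f : nat -> R) : R := fold_right Rmult 1 (map f (seq 1 n)).

Definition C : Type := (R * R)%type.
Definition C0 : C := (0, 0).
Definition C1 : C := (1, 0).
Definition RtoC (r : R) : C := (r, 0).
Definition Cadd (z w : C) : C := (fst z + fst w, snd z + snd w).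
Definition Cmul (z w : C) : C :=
  (fst z * fst w - snd z * snd w, fst z * snd w + snd z * fst w).
Definition Cconj (z : C) : C := (fst z, - snd z).
Definition Cexpi (t : R) : C := (cos t, sin t).

Definition C2 : Type := (C * C)%type.
Definition zero2 : C2 := (C0, C0).
Record M2 : Type := mkM2 { m11 : C; m12 : C; m21 : C; m22 : C }.
Definition Id2 : M2 := mkM2 C1 C0 C0 C1.
Definition Mmul (A B : M2) : M2 :=
  mkM2 (Cadd (Cmul (m11 A) (m11 B)) (Cmul (m12 A) (m21 B)))
       (Cadd (Cmul (m11 A) (m12 B)) (Cmul (m12 A) (m22 B)))
       (Cadd (Cmul (m21 A) (m11 B)) (Cmul (m22 A) (m21 B)))
       (Cadd (Cmul (m21 A) (m12 B)) (Cmul (m22 A) (m22 B))).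
Definition Mvec (A : M2) (v : C2) : C2 :=
  (Cadd (Cmul (m11 A) (fst v)) (Cmul (m12 A) (snd v)),
   Cadd (Cmul (m21 A) (fst v)) (Cmul (m22 A) (snd v))).
Definition vadd (u v : C2) : C2 := (Cadd (fst u) (fst v), Cadd (snd u) (snd v)).
Definition vscal (c : C) (v : C2) : C2 := (Cmul c (fst v), Cmul c (snd v)).
Definition cdot (u v : C2) : C :=
  Cadd (Cmul (fst u) (Cconj (fst v))) (Cmul (snd u) (Cconj (snd v))).

Fixpoint lincomb (cs : list C) (vs : list C2) : C2 :=
  match cs, vs with
  | c :: cs', v :: vs' => vadd (vscal c v) (lincomb cs' vs')
  | _, _ => zero2
  end.
Definition lin_indep (vs : list C2) : Prop :=
  forall cs : list C, length cs = length vs -> lincomb cs vs = zero2 ->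
    Forall (fun c => c = C0) cs.

(** Geometric multiplicity of the eigenvalue 1 of M = dim ker (M - I):
    the maximal size of a linearly independent family of fixed vectors. *)
Definition fixed_vec (M : M2) (v : C2) : Prop := Mvec M v = v.
Definition geom_mult_1 (M : M2) (m : nat) : Prop :=
  (exists vs, length vs = m /\ Forall (fixed_vec M) vs /\ lin_indep vs) /\
  (forall vs, Forall (fixed_vec M) vs -> lin_indep vs -> (length vs <= m)%nat).
Definition eigenvalue_1 (M : M2) : Prop :=
  exists v, v <> zero2 /\ fixed_vec M v.

Definition exceptional (a : R) : Prop :=
  exists k : nat, (1 <= k)%nat /\ a = PI / (2 * INR k).
Definition excb (a : R) : bool := decP (exceptional a).
(** O(pi/(2k)) = (-1)^k ; O_is_even a  <->  a in E and O(a) = 1 *)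
Definition O_is_even (a : R) : Prop :=
  exists k : nat, (1 <= k)%nat /\ a = PI / (2 * INR k) /\ Nat.Even k.

Definition Xeven : C2 :=
  (Cmul (RtoC (/ sqrt 2)) (Cexpi (- (PI / 4))), Cmul (RtoC (/ sqrt 2)) (Cexpi (PI / 4))).
Definition Xodd : C2 :=
  (Cmul (RtoC (/ sqrt 2)) (Cexpi (PI / 4)), Cmul (RtoC (/ sqrt 2)) (Cexpi (- (PI / 4)))).
Definition Xof (a : R) : C2 := if decP (O_is_even a) then Xeven else Xodd.

Definition theta (a : R) : R := PI ^ 2 / (2 * a).
Definition Amat (a : R) : M2 :=
  let cs := / sin (theta a) in
  let ct := cos (theta a) / sin (theta a) in
  mkM2 (RtoC cs) (0, - ct) (0, ct) (RtoC cs).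
Definition Bmat (l sigma : R) : M2 :=
  mkM2 (Cexpi (l * sigma)) C0 C0 (Cexpi (- (l * sigma))).

Section Polygon.
Variables (n : nat) (alpha ell : nat -> R).

Definition al (j : nat) : R := alpha (wrap n j).
Definition ll (j : nat) : R := ell (wrap n j).

Fixpoint Tpart (k : nat) (sigma : R) : M2 :=
  match k with
  | O => Id2
  | S k' => Mmul (Mmul (Amat (al k)) (Bmat (ll k) sigma)) (Tpart k' sigma)
  end.
Definition Tmat (sigma : R) : M2 := Tpart n sigma.

Definition any_exceptional : Prop :=
  exists j, (1 <= j <= n)%nat /\ exceptional (alpha j).

Fixpoint back (fuel j : nat) (sigma : R) : M2 :=
  match fuel with
  | O => Id2
  | S f => if excb (al j) then Id2
           else Mmul (Mmul (Amat (al j)) (Bmat (ll j) sigma))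
                     (back f (wrap n (j - 1)) sigma)
  end.
(** Previous exceptional vertex (cyclically) before vertex E (E itself if it
    is the only exceptional vertex). *)
Fixpoint prevE (fuel j : nat) : nat :=
  match fuel with
  | O => j
  | S f => if excb (al j) then j else prevE f (wrap n (j - 1))
  end.
Definition prev_exc (E : nat) : nat := prevE (n - 1) (wrap n (E - 1)).

(** For consecutive exceptional vertices E_{k-1}, E_k = E:
    U_k = B(ell_E) A(alpha_{E-1}) B(ell_{E-1}) ... A(alpha_{E_{k-1}+1}) B(ell_{E_{k-1}+1}). *)
Definition Umat (E : nat) (sigma : R) : M2 :=
  Mmul (Bmat (ll E) sigma) (back (n - 1) (wrap n (E - 1)) sigma).

Definition kappa_cond (E : nat) (sigma : R) : Prop :=
  exceptional (alpha E) /\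
  cdot (Mvec (Umat E sigma) (Xof (al (prev_exc E)))) (Xof (alpha E)) = C0.

Definition quasi_eigenvalue (sigma : R) : Prop :=
  0 <= sigma /\
  ((~ any_exceptional /\ eigenvalue_1 (Tmat sigma)) \/
   (any_exceptional /\ exists E, (1 <= E <= n)%nat /\ kappa_cond E sigma)).

Definition qe_mult_pos (sigma : R) (m : nat) : Prop :=
  (~ any_exceptional /\ geom_mult_1 (Tmat sigma) m) \/
  (any_exceptional /\
   m = length (filter (fun E => decP (kappa_cond E sigma)) (seq 1 n))).

Definition qe_mult_zero : R :=
  if decP any_exceptional then
    INR (length (filter (fun E => decP (exceptional (alpha E) /\
             ~ (O_is_even (al (prev_exc E)) <-> O_is_even (alpha E)))) (seq 1 n))) / 2
  else 1.

(** zeta is encoded by l : list bool of length n-1 giving zeta_2..zeta_n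
    (true = +1), with zeta_1 = +1. *)
Fixpoint all_sign_lists (k : nat) : list (list bool) :=
  match k with
  | O => [[]]
  | S k' => map (cons true) (all_sign_lists k') ++ map (cons false) (all_sign_lists k')
  end.
Definition zb (l : list bool) (j : nat) : bool :=
  let j' := wrap n j in if Nat.eqb j' 1 then true else nth (j' - 2) l true.
Definition zeta (l : list bool) (j : nat) : R := if zb l j then 1 else -1.
Definition in_ch (l : list bool) (j : nat) : bool := negb (Bool.eqb (zb l j) (zb l (S j))).
Definition pzeta (l : list bool) : R :=
  prod1n n (fun j => if in_ch l j then cos (theta (alpha j)) else 1).
Definition elldotzeta (l : list bool) : R := sum1n n (fun j => ell j * zeta l j).

Definition FP (sigma : R) : R :=
  fold_right Rplus 0
    (map (fun l => pzeta l * cos (elldotzeta l * sigma)) (all_sign_lists (n - 1)))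
  - prod1n n (fun j => sin (theta (alpha j))).

End Polygon.

Definition root_mult (f : R -> R) (x : R) (m : nat) : Prop :=
  exists D : nat -> R -> R,
    (forall y, D O y = f y) /\
    (forall k y, derivable_pt_lim (D k) y (D (S k) y)) /\
    (forall k, (k < m)%nat -> D k x = 0) /\
    D m x <> 0.

(* Main.v *)
From Stdlib Require Import Reals Lra Lia List Arith Bool ZArith FunctionalExtensionality.
Require Import Defs.
Import ListNotations.
Open Scope R_scope.

Definition tower (f : R -> R) (D : nat -> R -> R) : Prop :=
  (forall y, D O y = f y) /\ (forall k y, derivable_pt_lim (D k) y (D (S k) y)).
Definition smooth (f : R -> R) : Prop := exists D, tower f D.

Lemma dpl_ext (f g : R -> R) x l :
  (forall y, f y = g y) -> derivable_pt_lim f x l -> derivable_pt_lim g x l.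
Proof.
  intros H H1. assert (f = g) by (apply functional_extensionality; auto). subst; auto.
Qed.

Lemma tower_unique f D1 D2 : tower f D1 -> tower f D2 -> forall k y, D1 k y = D2 k y.
Proof.
  intros [H10 H1] [H20 H2] k. induction k; intro y.
  - rewrite H10, H20; auto.
  - apply (uniqueness_limite (D2 k) y).
    + apply (dpl_ext (D1 k)); auto.
    + apply H2.
Qed.

Lemma root_mult_iff f D x m : tower f D ->
  (root_mult f x m <-> ((forall k, (k < m)%nat -> D k x = 0) /\ D m x <> 0)).
Proof.
  intros HT. split.
  - intros [D' [H0 [H1 [H2 H3]]]].
    assert (HT' : tower f D') by (split; auto).
    split.
    + intros k Hk. rewrite (tower_unique f D D' HT HT'). auto.
    + rewrite (tower_unique f D D' HT HT'). auto.
  - intros [H2 H3]. destruct HT as [H0 H1]. exists D. repeat split; auto.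
Qed.

Lemma root_mult_unique f x m1 m2 : root_mult f x m1 -> root_mult f x m2 -> m1 = m2.
Proof.
  intros H1 H2. destruct H1 as [D [H0 [Hd [Hz Hnz]]]].
  assert (HT : tower f D) by (split; auto).
  apply (root_mult_iff f D x m2 HT) in H2. destruct H2 as [Hz2 Hnz2].
  destruct (lt_eq_lt_dec m1 m2) as [[Hlt|Heq]|Hgt]; auto.
  - exfalso. apply Hnz. apply Hz2. auto.
  - exfalso. apply Hnz2. apply Hz. auto.
Qed.

Lemma root_mult_ext f g x m : (forall y, f y = g y) -> root_mult f x m -> root_mult g x m.
Proof.
  intros H [D [H0 R]]. exists D. split; auto. intro y. rewrite H0; auto.
Qed.

Lemma smooth_ext f g : (forall y, f y = g y) -> smooth f -> smooth g.
Proof.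
  intros H [D [H0 H1]]. exists D. split; auto. intro y. rewrite H0; auto.
Qed.

Lemma tower_ext f g D : (forall y, f y = g y) -> tower f D -> tower g D.
Proof. intros H [H0 H1]. split; auto. intro y; rewrite H0; auto. Qed.

Lemma dpl_eq f x l l' : l = l' -> derivable_pt_lim f x l -> derivable_pt_lim f x l'.
Proof. intros ->; auto. Qed.
Lemma dpl_plus f g x a b : derivable_pt_lim f x a -> derivable_pt_lim g x b ->
  derivable_pt_lim (fun z => f z + g z) x (a + b).
Proof. intros; apply (derivable_pt_lim_plus f g); auto. Qed.
Lemma dpl_mult f g x a b : derivable_pt_lim f x a -> derivable_pt_lim g x b ->
  derivable_pt_lim (fun z => f z * g z) x (a * g x + f x * b).
Proof. intros; apply (derivable_pt_lim_mult f g); auto. Qed.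
Lemma dpl_const c x : derivable_pt_lim (fun _ => c) x 0.
Proof. apply (dpl_ext (fct_cte c)). intros; reflexivity. apply derivable_pt_lim_const. Qed.
Lemma dpl_id x : derivable_pt_lim (fun z => z) x 1.
Proof. apply derivable_pt_lim_id. Qed.

Fixpoint sumN (k : nat) (F : nat -> R) : R :=
  match k with O => 0 | S k' => sumN k' F + F k' end.

Lemma sumN_ext k F G : (forall i, (i < k)%nat -> F i = G i) -> sumN k F = sumN k G.
Proof.
  induction k; simpl; intros; auto. rewrite IHk by (intros; apply H; lia). rewrite H by lia. auto.
Qed.

Lemma sumN_shift k F : sumN (S k) F = F O + sumN k (fun j => F (S j)).
Proof.
  induction k; simpl in *; [lra|]. rewrite IHk. lra.
Qed.

Lemma sumN_plus k F G : sumN k (fun i => F i + G i) = sumN k F + sumN k G.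
Proof. induction k; simpl; lra. Qed.

Lemma sumN_zero k F : (forall i, (i < k)%nat -> F i = 0) -> sumN k F = 0.
Proof.
  induction k; simpl; intros; auto. rewrite IHk by (intros; apply H; lia). rewrite H by lia. lra.
Qed.

Lemma sumN_single k F i0 : (i0 < k)%nat -> (forall i, (i < k)%nat -> i <> i0 -> F i = 0) ->
  sumN k F = F i0.
Proof.
  induction k; intros Hi H; [lia|]. simpl.
  destruct (Nat.eq_dec i0 k) as [->|Hne].
  - rewrite sumN_zero. lra. intros i Hi'. apply H; lia.
  - rewrite IHk by (auto; lia). rewrite (H k) by lia. lra.
Qed.

Lemma dpl_sumN k (F : nat -> R -> R) (F' : nat -> R) y :
  (forall i, derivable_pt_lim (F i) y (F' i)) ->
  derivable_pt_lim (fun z => sumN k (fun i => F i z)) y (sumN k F').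
Proof.
  intros H. induction k; simpl.
  - apply (dpl_ext (fct_cte 0)). intros; reflexivity. apply derivable_pt_lim_const.
  - apply (derivable_pt_lim_plus (fun z => sumN k (fun i => F i z)) (F k)); auto.
Qed.

Fixpoint bn (k i : nat) : R :=
  match k, i with
  | _, O => 1
  | O, S _ => 0
  | S k', S i' => bn k' i' + bn k' (S i')
  end.

Lemma bn_big k i : (k < i)%nat -> bn k i = 0.
Proof.
  revert i; induction k; intros i H; destruct i; simpl; try lia; auto.
  rewrite !IHk by lia. lra.
Qed.

Lemma bn_pos k i : (i <= k)%nat -> 0 < bn k i.
Proof.
  revert i; induction k; intros i H; destruct i; simpl; try lra; try lia.
  destruct (Nat.eq_dec i k) as [->|Hne].
  - rewrite (bn_big k (S k)) by lia. rewrite Rplus_0_r. apply IHk; lia.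
  - assert (0 < bn k i) by (apply IHk; lia). assert (0 < bn k (S i)) by (apply IHk; lia). lra.
Qed.

Definition Lmul (Df Dg : nat -> R -> R) (k : nat) (y : R) : R :=
  sumN (S k) (fun i => bn k i * Df i y * Dg (k - i)%nat y).

Lemma Lmul_deriv Df Dg k y :
  (forall k y, derivable_pt_lim (Df k) y (Df (S k) y)) ->
  (forall k y, derivable_pt_lim (Dg k) y (Dg (S k) y)) ->
  derivable_pt_lim (Lmul Df Dg k) y (Lmul Df Dg (S k) y).
Proof.
  intros Hf Hg. unfold Lmul.
  replace (sumN (S (S k)) (fun i => bn (S k) i * Df i y * Dg (S k - i)%nat y)) with
    (sumN (S k) (fun i => bn k i * (Df (S i) y * Dg (k-i)%nat y + Df i y * Dg (S (k-i)) y))).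
  { apply (dpl_sumN (S k) (fun i z => bn k i * Df i z * Dg (k - i)%nat z)
     (fun i => bn k i * (Df (S i) y * Dg (k-i)%nat y + Df i y * Dg (S (k-i)) y))).
    intros i.
    apply (dpl_ext (fun z => bn k i * (Df i z * Dg (k-i)%nat z))). intros; ring.
    apply (derivable_pt_lim_scal (fun z => Df i z * Dg (k-i)%nat z)).
    apply (derivable_pt_lim_mult (Df i) (Dg (k-i)%nat)); auto. }
  replace (sumN (S k)
     (fun i => bn k i * (Df (S i) y * Dg (k - i)%nat y + Df i y * Dg (S (k - i)) y)))
    with (sumN (S k) (fun i => bn k i * Df (S i) y * Dg (k - i)%nat y) +
          sumN (S k) (fun i => bn k i * Df i y * Dg (S (k - i)) y)).
  2:{ rewrite <- sumN_plus. apply sumN_ext. intros; ring. }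
  rewrite (sumN_shift (S k) (fun i : nat => bn (S k) i * Df i y * Dg (S k - i)%nat y)).
  rewrite (sumN_shift k (fun i => bn k i * Df i y * Dg (S (k - i)) y)).
  simpl (bn (S k) 0). simpl (S k - 0)%nat. simpl (bn k 0). rewrite Nat.sub_0_r.
  assert (E1 : sumN (S k) (fun j => bn (S k) (S j) * Df (S j) y * Dg (S k - S j)%nat y) =
     sumN (S k) (fun i => bn k i * Df (S i) y * Dg (k - i)%nat y) +
     sumN (S k) (fun j => bn k (S j) * Df (S j) y * Dg (k - j)%nat y)).
  { rewrite <- sumN_plus. apply sumN_ext. intros i Hi. simpl. ring. }
  rewrite E1.
  assert (E2 : sumN (S k) (fun j => bn k (S j) * Df (S j) y * Dg (k - j)%nat y) =
     sumN k (fun j => bn k (S j) * Df (S j) y * Dg (S (k - S j)) y)).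
  { simpl. rewrite bn_big by lia. rewrite Nat.sub_diag.
    rewrite Rmult_0_l, Rmult_0_l, Rplus_0_r. apply sumN_ext. intros i Hi.
    replace (k - i)%nat with (S (k - S i)) by lia. auto. }
  rewrite E2. replace (bn k 0) with 1 by (destruct k; reflexivity). ring.
Qed.

Lemma tower_mult f g Df Dg : tower f Df -> tower g Dg ->
  tower (fun y => f y * g y) (Lmul Df Dg).
Proof.
  intros [Hf0 Hf] [Hg0 Hg]. split.
  - intro y. unfold Lmul. simpl. rewrite Hf0, Hg0. ring.
  - intros; apply Lmul_deriv; auto.
Qed.

Lemma smooth_mult f g : smooth f -> smooth g -> smooth (fun y => f y * g y).
Proof. intros [Df Hf] [Dg Hg]. eexists; apply tower_mult; eauto. Qed.

Lemma smooth_plus f g : smooth f -> smooth g -> smooth (fun y => f y + g y).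
Proof.
  intros [Df [Hf0 Hf]] [Dg [Hg0 Hg]]. exists (fun k y => Df k y + Dg k y). split.
  - intros; rewrite Hf0, Hg0; auto.
  - intros. apply (derivable_pt_lim_plus (Df k) (Dg k)); auto.
Qed.

Lemma smooth_const c : smooth (fun _ => c).
Proof.
  exists (fun k y => match k with O => c | _ => 0 end). split; auto.
  intros k y. destruct k.
  - apply (dpl_ext (fct_cte c)). intros; reflexivity. apply derivable_pt_lim_const.
  - apply (dpl_ext (fct_cte 0)). intros; reflexivity. apply derivable_pt_lim_const.
Qed.

Lemma dpl_cos_aff b c y : derivable_pt_lim (fun z => cos (b * z + c)) y (b * cos (b * y + c + PI/2)).
Proof.
  assert (H1 : derivable_pt_lim (fun z => b * z + c) y b).
  { eapply dpl_eq; [|apply dpl_plus; [apply dpl_mult; [apply dpl_const|apply dpl_id]|apply dpl_const]].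
    cbv beta. ring. }
  assert (H2 := derivable_pt_lim_comp _ cos y _ _ H1 (derivable_pt_lim_cos (b * y + c))).
  rewrite cos_plus, cos_PI2, sin_PI2.
  apply (dpl_ext (comp cos (fun z => b * z + c))). intros; reflexivity.
  replace (b * (cos (b * y + c) * 0 - sin (b * y + c) * 1)) with (- sin (b * y + c) * b) by ring.
  auto.
Qed.

Lemma smooth_cos_aff a b c : smooth (fun y => a * cos (b * y + c)).
Proof.
  exists (fun k y => a * b ^ k * cos (b * y + c + INR k * (PI/2))). split.
  - intros y. simpl. rewrite Rmult_0_l, Rplus_0_r. ring.
  - intros k y.
    apply (dpl_ext (fun z => (a * b ^ k) * cos (b * z + (c + INR k * (PI/2))))).
    { intros; rewrite Rplus_assoc; auto. }
    replace (a * b ^ S k * cos (b * y + c + INR (S k) * (PI / 2))) with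
      ((a * b ^ k) * (b * cos (b * y + (c + INR k * (PI/2)) + PI/2))).
    2:{ rewrite S_INR. simpl. replace (b * y + (c + INR k * (PI / 2)) + PI / 2) with
         (b * y + c + (INR k + 1) * (PI / 2)) by ring. ring. }
    apply (derivable_pt_lim_scal (fun z => cos (b * z + (c + INR k * (PI/2))))).
    apply dpl_cos_aff.
Qed.

Lemma smooth_cos b : smooth (fun y => cos (b * y)).
Proof.
  apply (smooth_ext (fun y => 1 * cos (b * y + 0))). intros; rewrite Rplus_0_r; ring.
  apply smooth_cos_aff.
Qed.

Lemma smooth_sin b : smooth (fun y => sin (b * y)).
Proof.
  apply (smooth_ext (fun y => 1 * cos (b * y + - (PI/2)))).
  { intros y. rewrite Rmult_1_l. rewrite cos_plus, cos_neg, sin_neg, cos_PI2, sin_PI2. ring. }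
  apply smooth_cos_aff.
Qed.

Lemma smooth_tower f : smooth f -> exists D, tower f D.
Proof. auto. Qed.

Lemma root_mult_mult f g x a b : root_mult f x a -> root_mult g x b ->
  root_mult (fun y => f y * g y) x (a + b).
Proof.
  intros [Df [Hf0 [Hf [Hfz Hfnz]]]] [Dg [Hg0 [Hg [Hgz Hgnz]]]].
  assert (HT := tower_mult f g Df Dg (conj Hf0 Hf) (conj Hg0 Hg)).
  apply (root_mult_iff _ _ x (a+b) HT). split.
  - intros k Hk. unfold Lmul. apply sumN_zero. intros i Hi.
    destruct (lt_dec i a) as [Hia|Hia].
    + rewrite Hfz by auto. ring.
    + rewrite Hgz by lia. ring.
  - unfold Lmul. rewrite (sumN_single _ _ a).
    2: lia.
    2:{ intros i Hi Hne.
      destruct (lt_dec i a) as [Hia|Hia]; [rewrite Hfz by auto; ring | rewrite Hgz by lia; ring]. }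
    replace (a + b - a)%nat with b by lia.
    assert (0 < bn (a+b) a) by (apply bn_pos; lia).
    intro Hc. apply Rmult_integral in Hc. destruct Hc as [Hc|Hc]; auto.
    apply Rmult_integral in Hc. destruct Hc; auto. lra.
Qed.

Lemma root_mult_0 f x : smooth f -> f x <> 0 -> root_mult f x 0.
Proof.
  intros [D [H0 H1]] Hx. exists D. repeat split; auto. intros; lia. rewrite H0; auto.
Qed.

Lemma root_mult_1 f x l : smooth f -> f x = 0 -> derivable_pt_lim f x l -> l <> 0 -> root_mult f x 1.
Proof.
  intros [D [H0 H1]] Hx Hd Hl. exists D. repeat split; auto.
  - intros k Hk. assert (k = O) by lia. subst. rewrite H0; auto.
  - replace (D 1%nat x) with l; auto. apply (uniqueness_limite f x); auto.
    apply (dpl_ext (D O)); auto.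
Qed.

Lemma root_mult_2 f f' x l : smooth f -> (forall y, derivable_pt_lim f y (f' y)) ->
  f x = 0 -> f' x = 0 -> derivable_pt_lim f' x l -> l <> 0 -> root_mult f x 2.
Proof.
  intros [D [H0 H1]] Hd Hx Hx' Hd2 Hl.
  assert (E1 : forall y, D 1%nat y = f' y).
  { intros y. apply (uniqueness_limite f y); auto. apply (dpl_ext (D O)); auto. }
  exists D. repeat split; auto.
  - intros k Hk. destruct k as [|[|k]]; try lia. rewrite H0; auto. rewrite E1; auto.
  - replace (D 2%nat x) with l; auto. apply (uniqueness_limite f' x); auto.
    apply (dpl_ext (D 1%nat)); auto.
Qed.

Record RM : Type := mkRM { r11 : R; r12 : R; r21 : R; r22 : R }.
Definition RI : RM := mkRM 1 0 0 1.
Definition RMmul (A B : RM) : RM :=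
  mkRM (r11 A * r11 B + r12 A * r21 B) (r11 A * r12 B + r12 A * r22 B)
       (r21 A * r11 B + r22 A * r21 B) (r21 A * r12 B + r22 A * r22 B).
Definition RMscal (c : R) (A : RM) : RM := mkRM (c * r11 A) (c * r12 A) (c * r21 A) (c * r22 A).
Definition rdet (A : RM) : R := r11 A * r22 A - r12 A * r21 A.
Definition rtr (A : RM) : R := r11 A + r22 A.
Definition Dm (c : R) : RM := mkRM (1 + c) 0 0 (1 - c).
Definition Rot (p : R) : RM := mkRM (cos p) (- sin p) (sin p) (cos p).
Definition Mf (c l s : R) : RM := RMmul (Dm c) (Rot (l * s)).
Definition ent (b b' : bool) (Y : RM) : R :=
  match b, b' with
  | true, true => r11 Y | true, false => r12 Y | false, true => r21 Y | false, false => r22 Y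
  end.

Ltac rmeq := match goal with |- mkRM _ _ _ _ = mkRM _ _ _ _ => f_equal end.

Lemma RM_eq (A B : RM) : r11 A = r11 B -> r12 A = r12 B -> r21 A = r21 B -> r22 A = r22 B -> A = B.
Proof. destruct A, B; simpl; intros; subst; auto. Qed.

Lemma RMmul_assoc A B C : RMmul A (RMmul B C) = RMmul (RMmul A B) C.
Proof. apply RM_eq; unfold RMmul; simpl; ring. Qed.
Lemma RMmul_I_l A : RMmul RI A = A.
Proof. apply RM_eq; unfold RMmul, RI; simpl; ring. Qed.
Lemma RMmul_I_r A : RMmul A RI = A.
Proof. apply RM_eq; unfold RMmul, RI; simpl; ring. Qed.
Lemma rdet_mul A B : rdet (RMmul A B) = rdet A * rdet B.
Proof. unfold rdet, RMmul; simpl; ring. Qed.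
Lemma rdet_Mf c l s : rdet (Mf c l s) = 1 - c ^ 2.
Proof. unfold Mf; rewrite rdet_mul. unfold rdet, Dm, Rot; simpl.
  pose proof (sin2_cos2 (l * s)). unfold Rsqr in H. nra. Qed.
Lemma rtr_comm A B : rtr (RMmul A B) = rtr (RMmul B A).
Proof. unfold rtr, RMmul; simpl; ring. Qed.

Definition emb (X : RM) : M2 :=
  mkM2 ((r11 X + r22 X) / 2, (r21 X - r12 X) / 2)
       ((r12 X + r21 X) / 2, (r22 X - r11 X) / 2)
       ((r12 X + r21 X) / 2, (r11 X - r22 X) / 2)
       ((r11 X + r22 X) / 2, (r12 X - r21 X) / 2).

Definition Mscal (c : R) (A : M2) : M2 :=
  mkM2 (Cmul (RtoC c) (m11 A)) (Cmul (RtoC c) (m12 A)) (Cmul (RtoC c) (m21 A)) (Cmul (RtoC c) (m22 A)).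

Lemma M2_eq (A B : M2) : m11 A = m11 B -> m12 A = m12 B -> m21 A = m21 B -> m22 A = m22 B -> A = B.
Proof. destruct A, B; simpl; intros; subst; auto. Qed.

Lemma C_eq (z w : C) : fst z = fst w -> snd z = snd w -> z = w.
Proof. destruct z, w; simpl; intros; subst; auto. Qed.

Ltac ceq := apply C_eq; simpl; try field; try ring.
Ltac meq := apply M2_eq; simpl; ceq.

Lemma emb_mul X Y : Mmul (emb X) (emb Y) = emb (RMmul X Y).
Proof. apply M2_eq; unfold Mmul, emb, RMmul, Cmul, Cadd; simpl; apply C_eq; simpl; field. Qed.

Lemma emb_I : emb RI = Id2.
Proof. apply M2_eq; unfold emb, RI, Id2, C1, C0; simpl; apply C_eq; simpl; field. Qed.

Lemma Mscal_emb c X : Mscal c (emb X) = emb (RMscal c X).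
Proof. apply M2_eq; unfold Mscal, emb, RMscal, Cmul, RtoC; simpl; apply C_eq; simpl; field. Qed.

Lemma Mmul_scal_l a A B : Mmul (Mscal a A) B = Mscal a (Mmul A B).
Proof. apply M2_eq; unfold Mmul, Mscal, Cmul, Cadd, RtoC; simpl; apply C_eq; simpl; ring. Qed.
Lemma Mmul_scal_r a A B : Mmul A (Mscal a B) = Mscal a (Mmul A B).
Proof. apply M2_eq; unfold Mmul, Mscal, Cmul, Cadd, RtoC; simpl; apply C_eq; simpl; ring. Qed.
Lemma Mscal_scal a b A : Mscal a (Mscal b A) = Mscal (a * b) A.
Proof. apply M2_eq; unfold Mscal, Cmul, RtoC; simpl; apply C_eq; simpl; ring. Qed.
Lemma Mscal_1 A : Mscal 1 A = A.
Proof. destruct A as [[a b] [c d] [e f] [g h]]. apply M2_eq; unfold Mscal, Cmul, RtoC; simpl; apply C_eq; simpl; ring. Qed.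

Definition cth (a : R) : R := cos (theta a).
Definition sth (a : R) : R := sin (theta a).
Definition Ahat (a : R) : M2 := mkM2 C1 (0, - cth a) (0, cth a) C1.

Lemma Amat_eq a : Amat a = Mscal (/ sth a) (Ahat a).
Proof. apply M2_eq; unfold Amat, Ahat, Mscal, Cmul, RtoC, C1, sth, cth; simpl; apply C_eq; simpl;
  unfold Rdiv; ring. Qed.


Lemma B_emb l s : Bmat l s = emb (Rot (l * s)).
Proof. apply M2_eq; unfold Bmat, emb, Rot, C0, Cexpi; simpl; apply C_eq; simpl;
  rewrite ?cos_neg, ?sin_neg; field. Qed.

Lemma sqrt2_sq : sqrt 2 * sqrt 2 = 2.
Proof. apply sqrt_sqrt; lra. Qed.
Lemma sqrt2_pos : 0 < sqrt 2.
Proof. apply sqrt_lt_R0; lra. Qed.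

Lemma inv_sqrt2_sq : / sqrt 2 * / sqrt 2 = / 2.
Proof. rewrite <- Rinv_mult, sqrt2_sq; auto. Qed.

Lemma Xeven_val : Xeven = ((1/2, -1/2), (1/2, 1/2)).
Proof.
  unfold Xeven, Cmul, RtoC, Cexpi. rewrite cos_neg, sin_neg, cos_PI4, sin_PI4.
  pose proof inv_sqrt2_sq. replace (1 / sqrt 2) with (/ sqrt 2) by (unfold Rdiv; ring).
  set (q := / sqrt 2) in *. simpl. f_equal; f_equal; nra.
Qed.
Lemma Xodd_val : Xodd = ((1/2, 1/2), (1/2, -1/2)).
Proof.
  unfold Xodd, Cmul, RtoC, Cexpi. rewrite cos_neg, sin_neg, cos_PI4, sin_PI4.
  pose proof inv_sqrt2_sq. replace (1 / sqrt 2) with (/ sqrt 2) by (unfold Rdiv; ring).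
  set (q := / sqrt 2) in *. simpl. f_equal; f_equal; nra.
Qed.

Definition Xb (b : bool) : C2 := if b then Xeven else Xodd.

Lemma cdot_emb c Y b b' :
  cdot (Mvec (Mscal c (emb Y)) (Xb b')) (Xb b) = (c * ent b b' Y, 0).
Proof.
  destruct b, b'; unfold Xb; rewrite ?Xeven_val, ?Xodd_val;
  unfold cdot, Mvec, Mscal, emb, ent, Cmul, Cadd, Cconj, RtoC; simpl; apply C_eq; simpl; field.
Qed.

Lemma AB_emb a l s : Mmul (Ahat a) (Bmat l s) = emb (Mf (cth a) l s).
Proof. apply M2_eq; unfold Mmul, Ahat, Bmat, emb, Mf, RMmul, Dm, Rot, Cmul, Cadd, C1, C0, Cexpi; simpl;
  apply C_eq; simpl; rewrite ?cos_neg, ?sin_neg. all: field. Qed.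

Definition Cdet (K : M2) : C := Cadd (Cmul (m11 K) (m22 K)) (Cmul (-1, 0) (Cmul (m12 K) (m21 K))).
Definition Cdet2 (v w : C2) : C := Cadd (Cmul (fst v) (snd w)) (Cmul (-1, 0) (Cmul (snd v) (fst w))).

Lemma Ceq_dec (z w : C) : {z = w} + {z <> w}.
Proof.
  destruct z as [a b], w as [c d].
  destruct (Req_EM_T a c); destruct (Req_EM_T b d); subst; auto;
  right; intro H; injection H; intros; auto.
Qed.

Lemma C2_eq (u v : C2) : fst u = fst v -> snd u = snd v -> u = v.
Proof. destruct u, v; simpl; intros; subst; auto. Qed.

Lemma Cmul_eq0 z w : Cmul z w = C0 -> z = C0 \/ w = C0.
Proof.
  destruct z as [a b], w as [c d]; unfold Cmul, C0; simpl; intro H; injection H; intros H1 H2.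
  destruct (Req_EM_T (a*a+b*b) 0) as [E|E].
  - left. f_equal; nra.
  - right. assert (E1 : (a*a+b*b) * c = 0) by (replace ((a*a+b*b)*c) with (a*(a*c-b*d) + b*(a*d+b*c)) by ring; rewrite H1, H2; ring).
    assert (E2 : (a*a+b*b) * d = 0) by (replace ((a*a+b*b)*d) with (a*(a*d+b*c) - b*(a*c-b*d)) by ring; rewrite H1, H2; ring).
    apply Rmult_integral in E1; apply Rmult_integral in E2.
    destruct E1; [contradiction|]; destruct E2; [contradiction|]. subst; auto.
Qed.

Ltac cring := repeat (apply C2_eq || apply C_eq); simpl; ring.

Lemma Mvec_eq0 K v : Mvec K v = zero2 ->
  Cadd (Cmul (m11 K) (fst v)) (Cmul (m12 K) (snd v)) = C0 /\
  Cadd (Cmul (m21 K) (fst v)) (Cmul (m22 K) (snd v)) = C0.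
Proof. unfold Mvec, zero2. intro H. split; [apply (f_equal fst) in H | apply (f_equal snd) in H]; exact H. Qed.

Lemma neq_zero2 (v : C2) : v <> zero2 -> fst v <> C0 \/ snd v <> C0.
Proof.
  destruct v as [a b]; simpl; intro H.
  destruct (Ceq_dec a C0); destruct (Ceq_dec b C0); subst; auto; exfalso; apply H; reflexivity.
Qed.

Lemma nz_fst (v : C2) : fst v <> C0 -> v <> zero2.
Proof. intros H E. apply H. rewrite E. reflexivity. Qed.
Lemma nz_snd (v : C2) : snd v <> C0 -> v <> zero2.
Proof. intros H E. apply H. rewrite E. reflexivity. Qed.
Lemma C1_nz : C1 <> C0.
Proof. unfold C1, C0; intro E; injection E; intros; lra. Qed.

Lemma ker_det (K : M2) v : Mvec K v = zero2 -> v <> zero2 -> Cdet K = C0.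
Proof.
  intros H Hv. apply Mvec_eq0 in H. destruct H as [H1 H2].
  assert (E1 : Cmul (Cdet K) (fst v) = C0).
  { transitivity (Cadd (Cmul (m22 K) (Cadd (Cmul (m11 K) (fst v)) (Cmul (m12 K) (snd v))))
       (Cmul (-1,0) (Cmul (m12 K) (Cadd (Cmul (m21 K) (fst v)) (Cmul (m22 K) (snd v)))))).
    - unfold Cdet, Cmul, Cadd; cring.
    - rewrite H1, H2. unfold Cmul, Cadd, C0; cring. }
  assert (E2 : Cmul (Cdet K) (snd v) = C0).
  { transitivity (Cadd (Cmul (m11 K) (Cadd (Cmul (m21 K) (fst v)) (Cmul (m22 K) (snd v))))
       (Cmul (-1,0) (Cmul (m21 K) (Cadd (Cmul (m11 K) (fst v)) (Cmul (m12 K) (snd v)))))).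
    - unfold Cdet, Cmul, Cadd; cring.
    - rewrite H1, H2. unfold Cmul, Cadd, C0; cring. }
  apply Cmul_eq0 in E1; apply Cmul_eq0 in E2.
  destruct E1 as [E1|E1]; auto. destruct E2 as [E2|E2]; auto.
  destruct (neq_zero2 v Hv); contradiction.
Qed.

Lemma neg_nz z : z <> C0 -> Cmul (-1, 0) z <> C0.
Proof.
  intros H E. apply H. destruct z as [p q]. unfold Cmul, C0 in *; simpl in *.
  injection E; intros. f_equal; lra.
Qed.

Lemma det_ker (K : M2) : Cdet K = C0 -> exists v, v <> zero2 /\ Mvec K v = zero2.
Proof.
  intro H.
  assert (Hd : Cadd (Cmul (m11 K) (m22 K)) (Cmul (-1, 0) (Cmul (m12 K) (m21 K))) = C0) by exact H.
  destruct (Ceq_dec (m11 K) C0) as [Ha|Ha]; [destruct (Ceq_dec (m12 K) C0) as [Hb|Hb]|].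
  - destruct (Ceq_dec (m21 K) C0) as [Hc|Hc]; [destruct (Ceq_dec (m22 K) C0) as [Hd'|Hd']|].
    + exists (C1, C0). split. apply nz_fst; apply C1_nz.
      unfold Mvec, zero2. rewrite Ha, Hb, Hc, Hd'. unfold C0, C1, Cmul, Cadd; cring.
    + exists (m22 K, Cmul (-1,0) (m21 K)). split. apply nz_fst; auto.
      unfold Mvec, zero2. simpl fst; simpl snd. rewrite Ha, Hb, Hc. unfold C0, Cmul, Cadd; cring.
    + exists (m22 K, Cmul (-1,0) (m21 K)). split.
      * apply nz_snd; apply neg_nz; auto.
      * unfold Mvec, zero2. simpl fst; simpl snd. rewrite Ha, Hb. unfold C0, Cmul, Cadd; cring.
  - exists (m12 K, Cmul (-1,0) (m11 K)). split. apply nz_fst; auto.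
    unfold Mvec, zero2; simpl fst; simpl snd. apply C2_eq; simpl fst; simpl snd.
    + unfold Cmul, Cadd, C0; cring.
    + transitivity (Cmul (-1,0) (Cadd (Cmul (m11 K) (m22 K)) (Cmul (-1, 0) (Cmul (m12 K) (m21 K))))).
      unfold Cmul, Cadd; cring. rewrite Hd. unfold Cmul, C0; cring.
  - exists (m12 K, Cmul (-1,0) (m11 K)). split.
    + apply nz_snd; apply neg_nz; auto.
    + unfold Mvec, zero2; simpl fst; simpl snd. apply C2_eq; simpl fst; simpl snd.
      * unfold Cmul, Cadd, C0; cring.
      * transitivity (Cmul (-1,0) (Cadd (Cmul (m11 K) (m22 K)) (Cmul (-1, 0) (Cmul (m12 K) (m21 K))))).
        unfold Cmul, Cadd; cring. rewrite Hd. unfold Cmul, C0; cring.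
Qed.

Lemma ker_1dim (K : M2) v w :
  (m11 K <> C0 \/ m12 K <> C0 \/ m21 K <> C0 \/ m22 K <> C0) ->
  Mvec K v = zero2 -> Mvec K w = zero2 -> Cdet2 v w = C0.
Proof.
  intros Hnz Hv Hw. apply Mvec_eq0 in Hv; apply Mvec_eq0 in Hw.
  destruct Hv as [Hv1 Hv2]; destruct Hw as [Hw1 Hw2].
  assert (R1 : forall r1 r2, Cadd (Cmul r1 (fst v)) (Cmul r2 (snd v)) = C0 ->
     Cadd (Cmul r1 (fst w)) (Cmul r2 (snd w)) = C0 ->
     Cmul r1 (Cdet2 v w) = C0 /\ Cmul r2 (Cdet2 v w) = C0).
  { intros r1 r2 E1 E2. split.
    - transitivity (Cadd (Cmul (snd w) (Cadd (Cmul r1 (fst v)) (Cmul r2 (snd v))))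
        (Cmul (-1,0) (Cmul (snd v) (Cadd (Cmul r1 (fst w)) (Cmul r2 (snd w)))))).
      unfold Cdet2, Cmul, Cadd; cring. rewrite E1, E2. unfold Cmul, Cadd, C0; cring.
    - transitivity (Cadd (Cmul (fst v) (Cadd (Cmul r1 (fst w)) (Cmul r2 (snd w))))
        (Cmul (-1,0) (Cmul (fst w) (Cadd (Cmul r1 (fst v)) (Cmul r2 (snd v)))))).
      unfold Cdet2, Cmul, Cadd; cring. rewrite E1, E2. unfold Cmul, Cadd, C0; cring. }
  destruct (R1 _ _ Hv1 Hw1) as [Ea Eb]. destruct (R1 _ _ Hv2 Hw2) as [Ec Ed].
  destruct Hnz as [H|[H|[H|H]]];
  [apply Cmul_eq0 in Ea | apply Cmul_eq0 in Eb | apply Cmul_eq0 in Ec | apply Cmul_eq0 in Ed];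
  intuition.
Qed.

Lemma vscal0 v : vscal C0 v = zero2.
Proof. unfold vscal, zero2, C0, Cmul; cring. Qed.
Lemma vadd0 v : vadd v zero2 = v.
Proof. destruct v as [[a b] [c d]]. unfold vadd, zero2, C0, Cadd; cring. Qed.

Lemma lincomb_zeros k vs : lincomb (repeat C0 k) vs = zero2.
Proof.
  revert vs; induction k; intros vs; destruct vs; simpl; auto.
  rewrite IHk, vscal0, vadd0. auto.
Qed.

Lemma dep2 v w : Cdet2 v w = C0 -> exists x y, (x <> C0 \/ y <> C0) /\ vadd (vscal x v) (vscal y w) = zero2.
Proof.
  intro H. unfold Cdet2 in H.
  destruct (Ceq_dec (fst v) C0) as [E1|E1]; [destruct (Ceq_dec (fst w) C0) as [E2|E2]|].
  - destruct (Ceq_dec (snd v) C0) as [E3|E3]; [destruct (Ceq_dec (snd w) C0) as [E4|E4]|].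
    + exists C1, C0. split. left; apply C1_nz.
      unfold vadd, vscal, zero2. rewrite E1, E2, E3, E4. unfold C0, C1, Cmul, Cadd; cring.
    + exists (snd w), (Cmul (-1,0) (snd v)). split. auto.
      unfold vadd, vscal, zero2. rewrite E1, E2. unfold C0, Cmul, Cadd; cring.
    + exists (snd w), (Cmul (-1,0) (snd v)). split.
      * right. apply neg_nz; auto.
      * unfold vadd, vscal, zero2. rewrite E1, E2. unfold C0, Cmul, Cadd; cring.
  - exists (fst w), (Cmul (-1,0) (fst v)). split. auto.
    unfold vadd, vscal, zero2; apply C2_eq; simpl fst; simpl snd.
    + unfold Cmul, Cadd, C0; cring.
    + transitivity (Cmul (-1,0) (Cadd (Cmul (fst v) (snd w)) (Cmul (-1, 0) (Cmul (snd v) (fst w))))).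
      unfold Cmul, Cadd; cring. rewrite H. unfold Cmul, C0; cring.
  - exists (fst w), (Cmul (-1,0) (fst v)). split.
    + right. apply neg_nz; auto.
    + unfold vadd, vscal, zero2; apply C2_eq; simpl fst; simpl snd.
      * unfold Cmul, Cadd, C0; cring.
      * transitivity (Cmul (-1,0) (Cadd (Cmul (fst v) (snd w)) (Cmul (-1, 0) (Cmul (snd v) (fst w))))).
        unfold Cmul, Cadd; cring. rewrite H. unfold Cmul, C0; cring.
Qed.

Lemma not_indep2 v w rest : Cdet2 v w = C0 -> ~ lin_indep (v :: w :: rest).
Proof.
  intros H Hi. destruct (dep2 v w H) as [x [y [Hxy E]]].
  specialize (Hi (x :: y :: repeat C0 (length rest))).
  simpl in Hi. rewrite repeat_length, lincomb_zeros, vadd0 in Hi.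
  assert (Hf : Forall (fun c => c = C0) (x :: y :: repeat C0 (length rest))) by (apply Hi; auto).
  inversion Hf; subst. inversion H3; subst. destruct Hxy; auto.
Qed.

Lemma not_indep3 v w u rest : ~ lin_indep (v :: w :: u :: rest).
Proof.
  intro Hi. destruct (Ceq_dec (Cdet2 v w) C0) as [E|E].
  - apply (not_indep2 v w (u :: rest) E Hi).
  - specialize (Hi (Cdet2 w u :: Cmul (-1,0) (Cdet2 v u) :: Cdet2 v w :: repeat C0 (length rest))).
    simpl in Hi. rewrite repeat_length, lincomb_zeros, vadd0 in Hi.
    assert (Hf : Forall (fun c => c = C0) (Cdet2 w u :: Cmul (-1,0) (Cdet2 v u) :: Cdet2 v w :: repeat C0 (length rest))).
    { apply Hi; auto. destruct v as [[a1 a2] [a3 a4]], w as [[b1 b2] [b3 b4]], u as [[c1 c2] [c3 c4]].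
      unfold vadd, vscal, zero2, Cdet2, Cmul, Cadd, C0; simpl. cring. }
    inversion Hf; subst. inversion H2; subst. inversion H4; subst. contradiction.
Qed.

Lemma indep1 v : v <> zero2 -> lin_indep [v].
Proof.
  intros Hv cs Hl Hc. destruct cs as [|c [|]]; simpl in Hl; try lia.
  simpl in Hc. rewrite vadd0 in Hc. constructor; auto.
  assert (H1 : Cmul c (fst v) = C0) by (apply (f_equal fst) in Hc; exact Hc).
  assert (H2 : Cmul c (snd v) = C0) by (apply (f_equal snd) in Hc; exact Hc).
  apply Cmul_eq0 in H1; apply Cmul_eq0 in H2.
  destruct H1; auto. destruct H2; auto. destruct (neq_zero2 v Hv); contradiction.
Qed.

Lemma indep_e12 : lin_indep [(C1, C0); (C0, C1)].
Proof.
  intros cs Hl Hc. destruct cs as [|c [|d [|]]]; simpl in Hl; try lia.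
  simpl in Hc. rewrite vadd0 in Hc.
  assert (E1 : c = fst (vadd (vscal c (C1, C0)) (vscal d (C0, C1)))).
  { destruct c, d; unfold vadd, vscal, Cadd, Cmul, C0, C1; cring. }
  assert (E2 : d = snd (vadd (vscal c (C1, C0)) (vscal d (C0, C1)))).
  { destruct c, d; unfold vadd, vscal, Cadd, Cmul, C0, C1; cring. }
  rewrite Hc in E1, E2. simpl in E1, E2. subst. repeat constructor.
Qed.

Lemma geom_unique M m1 m2 : geom_mult_1 M m1 -> geom_mult_1 M m2 -> m1 = m2.
Proof.
  intros [[vs1 [L1 [F1 I1]]] H1] [[vs2 [L2 [F2 I2]]] H2].
  specialize (H1 vs2 F2 I2). specialize (H2 vs1 F1 I1). lia.
Qed.

Definition RsubI (Y : RM) : RM := mkRM (r11 Y - 1) (r12 Y) (r21 Y) (r22 Y - 1).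

Lemma fixed_iff Y v : fixed_vec (emb Y) v <-> Mvec (emb (RsubI Y)) v = zero2.
Proof.
  unfold fixed_vec. destruct v as [[a b] [c d]]. destruct Y as [y1 y2 y3 y4].
  unfold Mvec, emb, RsubI, zero2, Cmul, Cadd, C0; simpl. split; intro H.
  - injection H; intros. apply C2_eq; apply C_eq; simpl; field_simplify; field_simplify in H0;
    field_simplify in H1; field_simplify in H2; field_simplify in H3; lra.
  - injection H; intros. apply C2_eq; apply C_eq; simpl; field_simplify; field_simplify in H0;
    field_simplify in H1; field_simplify in H2; field_simplify in H3; lra.
Qed.

Lemma Cdet_emb X : Cdet (emb X) = (rdet X, 0).
Proof. unfold Cdet, emb, rdet, Cmul, Cadd; apply C_eq; simpl; field. Qed.

Lemma eig_iff Y : rdet Y = 1 -> (eigenvalue_1 (emb Y) <-> rtr Y = 2).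
Proof.
  intro HY. assert (Hd : rdet (RsubI Y) = 2 - rtr Y) by (unfold rdet, RsubI, rtr in *; simpl; lra).
  split.
  - intros [v [Hv Hf]]. apply fixed_iff in Hf. apply ker_det in Hf; auto.
    rewrite Cdet_emb in Hf. injection Hf; intros. lra.
  - intro Ht. destruct (det_ker (emb (RsubI Y))) as [v [Hv Hk]].
    rewrite Cdet_emb. unfold C0. f_equal. lra.
    exists v. split; auto. apply fixed_iff; auto.
Qed.

Lemma geom_I : geom_mult_1 (emb RI) 2.
Proof.
  rewrite emb_I. split.
  - exists [(C1, C0); (C0, C1)]. split; auto. split; [|apply indep_e12].
    repeat constructor; unfold fixed_vec, Mvec, Id2, C1, C0, Cmul, Cadd; cring.
  - intros vs _ Hi. destruct vs as [|v [|w [|u rest]]]; simpl; try lia.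
    exfalso. apply (not_indep3 v w u rest Hi).
Qed.

Lemma geom_par Y : rdet Y = 1 -> rtr Y = 2 -> Y <> RI -> geom_mult_1 (emb Y) 1.
Proof.
  intros Hd Ht Hne.
  assert (Hd' : Cdet (emb (RsubI Y)) = C0).
  { rewrite Cdet_emb. unfold C0. f_equal. unfold rdet, rtr, RsubI in *; simpl; lra. }
  split.
  - destruct (det_ker _ Hd') as [v [Hv Hk]]. exists [v]. split; auto. split.
    + constructor; auto. apply fixed_iff; auto.
    + apply indep1; auto.
  - intros vs Hf Hi. destruct vs as [|v [|w rest]]; simpl; try lia.
    exfalso. inversion Hf; subst. inversion H2; subst.
    apply fixed_iff in H1. apply fixed_iff in H3.
    apply (not_indep2 v w rest); auto.
    apply (ker_1dim (emb (RsubI Y))); auto.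
    destruct (Ceq_dec (m11 (emb (RsubI Y))) C0) as [E1|E1]; auto.
    destruct (Ceq_dec (m12 (emb (RsubI Y))) C0) as [E2|E2]; auto.
    exfalso. apply Hne. destruct Y as [y1 y2 y3 y4]. unfold emb, RsubI, C0, RI in *; simpl in *.
    injection E1; injection E2; intros. f_equal; lra.
Qed.

Definition sumL {T} (L : list T) (f : T -> R) : R := fold_right Rplus 0 (map f L).

Lemma sumL_app {T} (L1 L2 : list T) f : sumL (L1 ++ L2) f = sumL L1 f + sumL L2 f.
Proof. unfold sumL. rewrite map_app. induction L1; simpl; [lra|]. rewrite IHL1; lra. Qed.

Lemma sumL_ext_in {T} (L : list T) f g : (forall x, In x L -> f x = g x) -> sumL L f = sumL L g.
Proof. intros H. unfold sumL. f_equal. apply map_ext_in; auto. Qed.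

Lemma sumL_lin4 {T} (L : list T) a1 a2 a3 a4 f1 f2 f3 f4 :
  sumL L (fun x => a1 * f1 x + a2 * f2 x + a3 * f3 x + a4 * f4 x) =
  a1 * sumL L f1 + a2 * sumL L f2 + a3 * sumL L f3 + a4 * sumL L f4.
Proof. induction L; unfold sumL in *; simpl; [ring|]. rewrite IHL. ring. Qed.

Lemma ASL_snoc k (f : list bool -> R) :
  sumL (all_sign_lists (S k)) f =
  sumL (all_sign_lists k) (fun l => f (l ++ [true]) + f (l ++ [false])).
Proof.
  revert f; induction k; intro f.
  - unfold sumL; simpl. ring.
  - change (all_sign_lists (S (S k))) with
      (map (cons true) (all_sign_lists (S k)) ++ map (cons false) (all_sign_lists (S k))).
    change (all_sign_lists (S k)) with
      (map (cons true) (all_sign_lists k) ++ map (cons false) (all_sign_lists k)) at 3.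
    rewrite !sumL_app.
    assert (Hm : forall (g : list bool -> R) b L, sumL (map (cons b) L) g = sumL L (fun l => g (b :: l))).
    { intros g b L. unfold sumL. rewrite map_map. auto. }
    rewrite !Hm. rewrite (IHk (fun l => f (true :: l))), (IHk (fun l => f (false :: l))). auto.
Qed.

Lemma ASL_length k l : In l (all_sign_lists k) -> length l = k.
Proof.
  revert l; induction k; simpl; intros l H.
  - destruct H as [<-|[]]; auto.
  - apply in_app_or in H. destruct H as [H|H]; apply in_map_iff in H; destruct H as [l' [<- H]];
    simpl; f_equal; auto.
Qed.

Lemma prod1n_S k f : prod1n (S k) f = prod1n k f * f (S k).
Proof.
  unfold prod1n. rewrite seq_S, map_app. simpl.
  generalize (map f (seq 1 k)). induction l; simpl; [ring|]. rewrite IHl; ring.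
Qed.
Lemma sum1n_S k f : sum1n (S k) f = sum1n k f + f (S k).
Proof.
  unfold sum1n. rewrite seq_S, map_app. simpl.
  generalize (map f (seq 1 k)). induction l; simpl; [ring|]. rewrite IHl; ring.
Qed.
Lemma prod1n_ext k f g : (forall j, (1 <= j <= k)%nat -> f j = g j) -> prod1n k f = prod1n k g.
Proof.
  intros H. unfold prod1n. f_equal. apply map_ext_in. intros j Hj. apply in_seq in Hj. apply H; lia.
Qed.
Lemma sum1n_ext k f g : (forall j, (1 <= j <= k)%nat -> f j = g j) -> sum1n k f = sum1n k g.
Proof.
  intros H. unfold sum1n. f_equal. apply map_ext_in. intros j Hj. apply in_seq in Hj. apply H; lia.
Qed.
Lemma prod1n_0 f : prod1n 0 f = 1.
Proof. reflexivity. Qed.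
Lemma sum1n_0 f : sum1n 0 f = 0.
Proof. reflexivity. Qed.

Lemma wrap_id n j : (1 <= j <= n)%nat -> wrap n j = j.
Proof.
  intros H. unfold wrap. replace (j + n - 1)%nat with ((j - 1) + 1 * n)%nat by lia.
  rewrite Nat.Div0.mod_add. rewrite Nat.mod_small by lia. lia.
Qed.
Lemma wrap_Sn n : (1 <= n)%nat -> wrap n (S n) = 1%nat.
Proof.
  intros H. unfold wrap. replace (S n + n - 1)%nat with (0 + 2 * n)%nat by lia.
  rewrite Nat.Div0.mod_add. rewrite Nat.mod_small by lia. lia.
Qed.
Lemma wrap_0 n : (1 <= n)%nat -> wrap n 0 = n.
Proof.
  intros H. unfold wrap. replace (0 + n - 1)%nat with (n - 1)%nat by lia.
  rewrite Nat.mod_small by lia. lia.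
Qed.
Lemma wrap_range n j : (1 <= n)%nat -> (1 <= wrap n j <= n)%nat.
Proof. intros H. unfold wrap. pose proof (Nat.mod_upper_bound (j + n - 1) n). lia. Qed.

Section Poly.
Variables (n : nat) (alpha ell : nat -> R).
Hypothesis Hn : (1 <= n)%nat.

Local Notation al := (al n alpha).
Local Notation ll := (ll n ell).

Fixpoint Pk (k : nat) (s : R) : RM :=
  match k with
  | O => RI
  | S k' => RMmul (Mf (cth (al (S k'))) (ll (S k')) s) (Pk k' s)
  end.

Fixpoint pinv (k : nat) : R :=
  match k with O => 1 | S k' => / sth (al (S k')) * pinv k' end.

Lemma Tpart_eq k s : Tpart n alpha ell k s = Mscal (pinv k) (emb (Pk k s)).
Proof.
  induction k; simpl.
  - rewrite emb_I, Mscal_1. reflexivity.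
  - rewrite IHk, Amat_eq, Mmul_scal_l, AB_emb, Mmul_scal_l, Mmul_scal_r, emb_mul, Mscal_scal.
    reflexivity.
Qed.

Lemma det_Pk k s : rdet (Pk k s) = prod1n k (fun j => 1 - cth (al j) ^ 2).
Proof.
  induction k. unfold rdet, RI, prod1n; simpl; ring.
  change (Pk (S k) s) with (RMmul (Mf (cth (al (S k))) (ll (S k)) s) (Pk k s)).
  rewrite rdet_mul, rdet_Mf, IHk, prod1n_S. ring.
Qed.

Definition zb' (l : list bool) (j : nat) : bool := nth (j - 1) (true :: l) true.
Definition sgn (b : bool) : R := if b then 1 else -1.
Definition chg (l : list bool) (j : nat) : R :=
  if Bool.eqb (zb' l j) (zb' l (S j)) then 1 else cth (al j).
Definition endf (l : list bool) (k : nat) (a : bool) : R :=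
  if Bool.eqb (zb' l k) a then 1 else cth (al k).
Definition Ph (l : list bool) (k : nat) : R := sum1n k (fun j => ll j * sgn (zb' l j)).
Definition Wt (l : list bool) (k : nat) (a : bool) : R := prod1n k (chg l) * endf l (S k) a.

Lemma zb'_snoc l b j : (1 <= j <= S (length l))%nat -> zb' (l ++ [b]) j = zb' l j.
Proof.
  intros H. unfold zb'. destruct j as [|j]; [lia|]. replace (S j - 1)%nat with j by lia.
  destruct j; simpl; auto. rewrite app_nth1 by lia. auto.
Qed.
Lemma zb'_last l b : zb' (l ++ [b]) (S (S (length l))) = b.
Proof.
  unfold zb'. replace (S (S (length l)) - 1)%nat with (S (length l)) by lia. simpl.
  rewrite app_nth2 by lia. rewrite Nat.sub_diag. auto.
Qed.

Lemma Wt_snoc l b a : Wt (l ++ [b]) (S (length l)) a =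
  Wt l (length l) b * (if Bool.eqb b a then 1 else cth (al (S (S (length l))))).
Proof.
  unfold Wt, endf. rewrite prod1n_S. rewrite zb'_last.
  rewrite (prod1n_ext _ (chg (l ++ [b])) (chg l)).
  2:{ intros j Hj. unfold chg. rewrite !zb'_snoc by lia. auto. }
  unfold chg at 2. rewrite zb'_last. rewrite zb'_snoc by lia. ring.
Qed.

Lemma Ph_snoc l b : Ph (l ++ [b]) (S (S (length l))) = Ph l (S (length l)) + ll (S (S (length l))) * sgn b.
Proof.
  unfold Ph. rewrite sum1n_S. rewrite zb'_last. f_equal.
  apply sum1n_ext. intros j Hj. rewrite zb'_snoc by lia. auto.
Qed.

Lemma emb_Mf_11 c l s : m11 (emb (Mf c l s)) = (cos (l * s), sin (l * s)).
Proof. unfold emb, Mf, RMmul, Dm, Rot; simpl. apply C_eq; simpl; field. Qed.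
Lemma emb_Mf_12 c l s : m12 (emb (Mf c l s)) = (- c * sin (l * s), - c * cos (l * s)).
Proof. unfold emb, Mf, RMmul, Dm, Rot; simpl. apply C_eq; simpl; field. Qed.
Lemma emb_Mf_21 c l s : m21 (emb (Mf c l s)) = (- c * sin (l * s), c * cos (l * s)).
Proof. unfold emb, Mf, RMmul, Dm, Rot; simpl. apply C_eq; simpl; field. Qed.
Lemma emb_Mf_22 c l s : m22 (emb (Mf c l s)) = (cos (l * s), - sin (l * s)).
Proof. unfold emb, Mf, RMmul, Dm, Rot; simpl. apply C_eq; simpl; field. Qed.

Lemma path_exp k s :
  m11 (emb (Pk (S k) s)) =
    (sumL (all_sign_lists k) (fun l => Wt l k true * cos (Ph l (S k) * s)),
     sumL (all_sign_lists k) (fun l => Wt l k true * sin (Ph l (S k) * s))) /\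
  m21 (emb (Pk (S k) s)) =
    (- sumL (all_sign_lists k) (fun l => Wt l k false * sin (Ph l (S k) * s)),
     sumL (all_sign_lists k) (fun l => Wt l k false * cos (Ph l (S k) * s))).
Proof.
  induction k.
  - simpl Pk. rewrite RMmul_I_r. rewrite emb_Mf_11, emb_Mf_21.
    unfold sumL, Wt, endf, Ph, zb'; simpl. unfold sum1n; simpl. rewrite prod1n_0.
    replace ((ll 1 * 1 + 0) * s) with (ll 1 * s) by ring.
    split; apply C_eq; simpl; ring.
  - destruct IHk as [H1 H2].
    change (Pk (S (S k)) s) with (RMmul (Mf (cth (al (S (S k)))) (ll (S (S k))) s) (Pk (S k) s)).
    rewrite <- emb_mul.
    set (c := cth (al (S (S k)))). set (p := ll (S (S k)) * s).
    set (A := sumL (all_sign_lists k) (fun l => Wt l k true * cos (Ph l (S k) * s))) in *.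
    set (Bs := sumL (all_sign_lists k) (fun l => Wt l k true * sin (Ph l (S k) * s))) in *.
    set (Cs := sumL (all_sign_lists k) (fun l => Wt l k false * sin (Ph l (S k) * s))) in *.
    set (Cc := sumL (all_sign_lists k) (fun l => Wt l k false * cos (Ph l (S k) * s))) in *.
    rewrite !ASL_snoc.
    assert (Hl : forall l, In l (all_sign_lists k) -> length l = k) by apply ASL_length.
    split; cbn [Mmul m11 m21];
      rewrite H1, H2, ?emb_Mf_11, ?emb_Mf_12, ?emb_Mf_21, ?emb_Mf_22; apply C_eq; simpl fst; simpl snd.
    + transitivity (sumL (all_sign_lists k) (fun l =>
         cos p * (Wt l k true * cos (Ph l (S k) * s)) + (- sin p) * (Wt l k true * sin (Ph l (S k) * s))
         + (c * sin p) * (Wt l k false * sin (Ph l (S k) * s)) + (c * cos p) * (Wt l k false * cos (Ph l (S k) * s)))).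
      * rewrite sumL_lin4. unfold p, A, Bs, Cs, Cc. ring.
      * apply sumL_ext_in. intros l Hin. rewrite <- (Hl l Hin).
        rewrite !Wt_snoc, !Ph_snoc. rewrite (Hl l Hin). fold c. simpl Bool.eqb. unfold sgn.
        replace (ll (S (S k)) * 1) with (ll (S (S k))) by ring.
        replace ((Ph l (S k) + ll (S (S k))) * s) with (Ph l (S k) * s + p) by (unfold p; ring).
        replace ((Ph l (S k) + ll (S (S k)) * -1) * s) with (Ph l (S k) * s - p) by (unfold p; ring).
        rewrite cos_plus, cos_minus. ring.
    + transitivity (sumL (all_sign_lists k) (fun l =>
         sin p * (Wt l k true * cos (Ph l (S k) * s)) + (cos p) * (Wt l k true * sin (Ph l (S k) * s))
         + (c * cos p) * (Wt l k false * sin (Ph l (S k) * s)) + (- c * sin p) * (Wt l k false * cos (Ph l (S k) * s)))).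
      * rewrite sumL_lin4. unfold p, A, Bs, Cs, Cc. ring.
      * apply sumL_ext_in. intros l Hin. rewrite <- (Hl l Hin).
        rewrite !Wt_snoc, !Ph_snoc. rewrite (Hl l Hin). fold c. simpl Bool.eqb. unfold sgn.
        replace (ll (S (S k)) * 1) with (ll (S (S k))) by ring.
        replace ((Ph l (S k) + ll (S (S k))) * s) with (Ph l (S k) * s + p) by (unfold p; ring).
        replace ((Ph l (S k) + ll (S (S k)) * -1) * s) with (Ph l (S k) * s - p) by (unfold p; ring).
        rewrite sin_plus, sin_minus. ring.
    + transitivity (- sumL (all_sign_lists k) (fun l =>
         (c * sin p) * (Wt l k true * cos (Ph l (S k) * s)) + (c * cos p) * (Wt l k true * sin (Ph l (S k) * s))
         + (cos p) * (Wt l k false * sin (Ph l (S k) * s)) + (- sin p) * (Wt l k false * cos (Ph l (S k) * s)))).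
      * rewrite sumL_lin4. unfold p, A, Bs, Cs, Cc. ring.
      * f_equal. apply sumL_ext_in. intros l Hin. rewrite <- (Hl l Hin).
        rewrite !Wt_snoc, !Ph_snoc. rewrite (Hl l Hin). fold c. simpl Bool.eqb. unfold sgn.
        replace (ll (S (S k)) * 1) with (ll (S (S k))) by ring.
        replace ((Ph l (S k) + ll (S (S k))) * s) with (Ph l (S k) * s + p) by (unfold p; ring).
        replace ((Ph l (S k) + ll (S (S k)) * -1) * s) with (Ph l (S k) * s - p) by (unfold p; ring).
        rewrite sin_plus, sin_minus. ring.
    + transitivity (sumL (all_sign_lists k) (fun l =>
         (c * cos p) * (Wt l k true * cos (Ph l (S k) * s)) + (- c * sin p) * (Wt l k true * sin (Ph l (S k) * s))
         + (sin p) * (Wt l k false * sin (Ph l (S k) * s)) + (cos p) * (Wt l k false * cos (Ph l (S k) * s)))).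
      * rewrite sumL_lin4. unfold p, A, Bs, Cs, Cc. ring.
      * apply sumL_ext_in. intros l Hin. rewrite <- (Hl l Hin).
        rewrite !Wt_snoc, !Ph_snoc. rewrite (Hl l Hin). fold c. simpl Bool.eqb. unfold sgn.
        replace (ll (S (S k)) * 1) with (ll (S (S k))) by ring.
        replace ((Ph l (S k) + ll (S (S k))) * s) with (Ph l (S k) * s + p) by (unfold p; ring).
        replace ((Ph l (S k) + ll (S (S k)) * -1) * s) with (Ph l (S k) * s - p) by (unfold p; ring).
        rewrite cos_plus, cos_minus. ring.
Qed.


Lemma al_id j : (1 <= j <= n)%nat -> al j = alpha j.
Proof. intros H. unfold Defs.al. rewrite wrap_id; auto. Qed.
Lemma ll_id j : (1 <= j <= n)%nat -> ll j = ell j.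
Proof. intros H. unfold Defs.ll. rewrite wrap_id; auto. Qed.

Lemma zb_eq l j : (1 <= j <= n)%nat -> zb n l j = zb' l j.
Proof.
  intros H. unfold zb, zb'. rewrite wrap_id by auto.
  destruct j as [|[|j]]; try lia; simpl; auto. rewrite Nat.sub_0_r; auto.
Qed.
Lemma zb_Sn l : zb n l (S n) = true.
Proof. unfold zb. rewrite wrap_Sn by auto. simpl. auto. Qed.

Lemma FP_eq s : FP n alpha ell s = rtr (Pk n s) / 2 - prod1n n (fun j => sin (theta (alpha j))).
Proof.
  pose (m := (n - 1)%nat). assert (En : n = S m) by (unfold m; lia).
  assert (Pn : forall g, prod1n n g = prod1n m g * g n) by (intros; rewrite En, prod1n_S; auto).
  destruct (path_exp m s) as [H1 _].
  assert (Hre : fst (m11 (emb (Pk n s))) = rtr (Pk n s) / 2) by (unfold emb, rtr; simpl; auto).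
  rewrite <- Hre. replace (Pk n s) with (Pk (S m) s) by (rewrite <- En; reflexivity). rewrite H1. simpl fst. unfold FP. replace (n - 1)%nat with m by lia.
  f_equal. change (fold_right Rplus 0 (map (fun l => pzeta n alpha l * cos (elldotzeta n ell l * s)) (all_sign_lists m)))
    with (sumL (all_sign_lists m) (fun l => pzeta n alpha l * cos (elldotzeta n ell l * s))).
  apply sumL_ext_in. intros l Hl. f_equal.
  - unfold pzeta, Wt. rewrite Pn. rewrite <- En. f_equal.
    + apply prod1n_ext. intros j Hj. unfold in_ch, chg.
      rewrite !zb_eq by lia. rewrite al_id by lia. destruct (Bool.eqb (zb' l j) (zb' l (S j))); simpl; auto.
    + unfold in_ch, endf. rewrite zb_Sn, zb_eq by lia. rewrite al_id by lia.
      destruct (Bool.eqb (zb' l n) true); simpl; auto.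
  - f_equal. unfold elldotzeta, Ph. rewrite <- En. f_equal. apply sum1n_ext. intros j Hj.
    rewrite ll_id by lia. unfold zeta, sgn. rewrite zb_eq by lia. auto.
Qed.

End Poly.

Definition RMadd (A B : RM) : RM := mkRM (r11 A + r11 B) (r12 A + r12 B) (r21 A + r21 B) (r22 A + r22 B).
Definition RZ : RM := mkRM 0 0 0 0.
Definition RotD (p : R) : RM := mkRM (- sin p) (- cos p) (cos p) (- sin p).
Definition Mf1 (c l s : R) : RM := RMscal l (RMmul (Dm c) (RotD (l * s))).
Definition Mf2 (c l s : R) : RM := RMscal (- (l * l)) (Mf c l s).

Fixpoint PL (fs : list (R * R)) (s : R) : RM :=
  match fs with [] => RI | f :: fs' => RMmul (Mf (fst f) (snd f) s) (PL fs' s) end.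
Fixpoint PL1 (fs : list (R * R)) (s : R) : RM :=
  match fs with [] => RZ
  | f :: fs' => RMadd (RMmul (Mf1 (fst f) (snd f) s) (PL fs' s)) (RMmul (Mf (fst f) (snd f) s) (PL1 fs' s)) end.
Fixpoint PL2 (fs : list (R * R)) (s : R) : RM :=
  match fs with [] => RZ
  | f :: fs' => RMadd (RMadd (RMmul (Mf2 (fst f) (snd f) s) (PL fs' s))
                             (RMscal 2 (RMmul (Mf1 (fst f) (snd f) s) (PL1 fs' s))))
                      (RMmul (Mf (fst f) (snd f) s) (PL2 fs' s)) end.

Definition mder (A A' : R -> RM) : Prop :=
  forall y, derivable_pt_lim (fun z => r11 (A z)) y (r11 (A' y)) /\
            derivable_pt_lim (fun z => r12 (A z)) y (r12 (A' y)) /\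
            derivable_pt_lim (fun z => r21 (A z)) y (r21 (A' y)) /\
            derivable_pt_lim (fun z => r22 (A z)) y (r22 (A' y)).

Lemma dpl_mul2 f1 g1 f2 g2 x a1 b1 a2 b2 :
  derivable_pt_lim f1 x a1 -> derivable_pt_lim g1 x b1 ->
  derivable_pt_lim f2 x a2 -> derivable_pt_lim g2 x b2 ->
  derivable_pt_lim (fun z => f1 z * g1 z + f2 z * g2 z) x
    ((a1 * g1 x + f1 x * b1) + (a2 * g2 x + f2 x * b2)).
Proof. intros. apply dpl_plus; apply dpl_mult; auto. Qed.

Lemma mder_mul A A' B B' : mder A A' -> mder B B' ->
  mder (fun z => RMmul (A z) (B z)) (fun z => RMadd (RMmul (A' z) (B z)) (RMmul (A z) (B' z))).
Proof.
  intros HA HB y. destruct (HA y) as [a1 [a2 [a3 a4]]]. destruct (HB y) as [b1 [b2 [b3 b4]]].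
  unfold RMmul, RMadd; simpl.
  repeat split; (eapply dpl_eq; [|apply dpl_mul2; eauto]); cbv beta; ring.
Qed.

Lemma mder_add A A' B B' : mder A A' -> mder B B' ->
  mder (fun z => RMadd (A z) (B z)) (fun z => RMadd (A' z) (B' z)).
Proof.
  intros HA HB y. destruct (HA y) as [a1 [a2 [a3 a4]]]. destruct (HB y) as [b1 [b2 [b3 b4]]].
  unfold RMadd; simpl. repeat split; apply dpl_plus; auto.
Qed.

Lemma mder_scal c A A' : mder A A' -> mder (fun z => RMscal c (A z)) (fun z => RMscal c (A' z)).
Proof.
  intros HA y. destruct (HA y) as [a1 [a2 [a3 a4]]]. unfold RMscal; simpl.
  repeat split; (eapply dpl_eq; [|apply dpl_mult; [apply dpl_const|eauto]]); cbv beta; ring.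
Qed.

Lemma mder_const A : mder (fun _ => A) (fun _ => RZ).
Proof. intros y. unfold RZ; simpl. repeat split; apply dpl_const. Qed.

Lemma dpl_cosl l y : derivable_pt_lim (fun z => cos (l * z)) y (- (l * sin (l * y))).
Proof.
  assert (H1 : derivable_pt_lim (fun z => l * z) y l).
  { eapply dpl_eq; [|apply dpl_mult; [apply dpl_const|apply dpl_id]]. cbv beta; ring. }
  assert (H2 := derivable_pt_lim_comp _ cos y _ _ H1 (derivable_pt_lim_cos (l * y))).
  apply (dpl_ext (comp cos (fun z => l * z))). intros; reflexivity.
  eapply dpl_eq; [|exact H2]. ring.
Qed.
Lemma dpl_sinl l y : derivable_pt_lim (fun z => sin (l * z)) y (l * cos (l * y)).
Proof.
  assert (H1 : derivable_pt_lim (fun z => l * z) y l).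
  { eapply dpl_eq; [|apply dpl_mult; [apply dpl_const|apply dpl_id]]. cbv beta; ring. }
  assert (H2 := derivable_pt_lim_comp _ sin y _ _ H1 (derivable_pt_lim_sin (l * y))).
  apply (dpl_ext (comp sin (fun z => l * z))). intros; reflexivity.
  eapply dpl_eq; [|exact H2]. ring.
Qed.

Lemma dpl_kcos k l y : derivable_pt_lim (fun z => k * cos (l * z)) y (k * (- (l * sin (l * y)))).
Proof. eapply dpl_eq; [|apply dpl_mult; [apply dpl_const|apply dpl_cosl]]. cbv beta; ring. Qed.
Lemma dpl_ksin k l y : derivable_pt_lim (fun z => k * sin (l * z)) y (k * (l * cos (l * y))).
Proof. eapply dpl_eq; [|apply dpl_mult; [apply dpl_const|apply dpl_sinl]]. cbv beta; ring. Qed.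

Lemma mder_Mf c l : mder (Mf c l) (Mf1 c l).
Proof.
  intros y. unfold Mf, Mf1, RMmul, RMscal, Dm, Rot, RotD; simpl. repeat split.
  - apply (dpl_ext (fun z => (1 + c) * cos (l * z))). intros; ring.
    eapply dpl_eq; [|apply dpl_kcos]. ring.
  - apply (dpl_ext (fun z => (-(1 + c)) * sin (l * z))). intros; ring.
    eapply dpl_eq; [|apply dpl_ksin]. ring.
  - apply (dpl_ext (fun z => (1 - c) * sin (l * z))). intros; ring.
    eapply dpl_eq; [|apply dpl_ksin]. ring.
  - apply (dpl_ext (fun z => (1 - c) * cos (l * z))). intros; ring.
    eapply dpl_eq; [|apply dpl_kcos]. ring.
Qed.

Lemma mder_Mf1 c l : mder (Mf1 c l) (Mf2 c l).
Proof.
  intros y. unfold Mf, Mf1, Mf2, RMmul, RMscal, Dm, Rot, RotD; simpl. repeat split.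
  - apply (dpl_ext (fun z => (- l * (1 + c)) * sin (l * z))). intros; ring.
    eapply dpl_eq; [|apply dpl_ksin]. ring.
  - apply (dpl_ext (fun z => (- l * (1 + c)) * cos (l * z))). intros; ring.
    eapply dpl_eq; [|apply dpl_kcos]. ring.
  - apply (dpl_ext (fun z => (l * (1 - c)) * cos (l * z))). intros; ring.
    eapply dpl_eq; [|apply dpl_kcos]. ring.
  - apply (dpl_ext (fun z => (- l * (1 - c)) * sin (l * z))). intros; ring.
    eapply dpl_eq; [|apply dpl_ksin]. ring.
Qed.

Lemma mder_ext A A' B : (forall z, A z = B z) -> mder A A' -> mder B A'.
Proof.
  intros E H y. destruct (H y) as [a1 [a2 [a3 a4]]].
  repeat split.
  - apply (dpl_ext (fun z => r11 (A z))); auto. intros; rewrite E; auto.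
  - apply (dpl_ext (fun z => r12 (A z))); auto. intros; rewrite E; auto.
  - apply (dpl_ext (fun z => r21 (A z))); auto. intros; rewrite E; auto.
  - apply (dpl_ext (fun z => r22 (A z))); auto. intros; rewrite E; auto.
Qed.
Lemma mder_ext' A A' B' : (forall z, A' z = B' z) -> mder A A' -> mder A B'.
Proof. intros E H y. rewrite <- E. apply H. Qed.

Lemma mder_PL fs : mder (PL fs) (PL1 fs).
Proof.
  induction fs as [|f fs IH]; simpl.
  - apply mder_const.
  - apply (mder_mul (Mf (fst f) (snd f)) (Mf1 (fst f) (snd f)) (PL fs) (PL1 fs)); auto. apply mder_Mf.
Qed.

Lemma mder_PL1 fs : mder (PL1 fs) (PL2 fs).
Proof.
  induction fs as [|f fs IH]; simpl.
  - apply mder_const.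
  - eapply mder_ext'. 2:{ apply mder_add.
      apply (mder_mul (Mf1 (fst f) (snd f)) (Mf2 (fst f) (snd f)) (PL fs) (PL1 fs)). apply mder_Mf1. apply mder_PL.
      apply (mder_mul (Mf (fst f) (snd f)) (Mf1 (fst f) (snd f)) (PL1 fs) (PL2 fs)). apply mder_Mf. auto. }
    intros z. apply RM_eq; unfold RMadd, RMmul, RMscal; simpl; ring.
Qed.

Definition smat (A : R -> RM) : Prop :=
  smooth (fun z => r11 (A z)) /\ smooth (fun z => r12 (A z)) /\
  smooth (fun z => r21 (A z)) /\ smooth (fun z => r22 (A z)).

Lemma smat_mul A B : smat A -> smat B -> smat (fun z => RMmul (A z) (B z)).
Proof.
  intros [a1 [a2 [a3 a4]]] [b1 [b2 [b3 b4]]]. unfold RMmul; simpl.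
  repeat split; apply smooth_plus; apply smooth_mult; auto.
Qed.

Lemma smooth_kcos k l : smooth (fun z => k * cos (l * z)).
Proof. apply smooth_mult. apply smooth_const. apply smooth_cos. Qed.
Lemma smooth_ksin k l : smooth (fun z => k * sin (l * z)).
Proof. apply smooth_mult. apply smooth_const. apply smooth_sin. Qed.

Lemma smat_Mf c l : smat (Mf c l).
Proof.
  unfold Mf, RMmul, Dm, Rot; simpl. repeat split.
  - apply (smooth_ext (fun z => (1 + c) * cos (l * z))). intros; simpl; ring. apply smooth_kcos.
  - apply (smooth_ext (fun z => (-(1 + c)) * sin (l * z))). intros; simpl; ring. apply smooth_ksin.
  - apply (smooth_ext (fun z => (1 - c) * sin (l * z))). intros; simpl; ring. apply smooth_ksin.
  - apply (smooth_ext (fun z => (1 - c) * cos (l * z))). intros; simpl; ring. apply smooth_kcos.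
Qed.

Lemma smat_PL fs : smat (PL fs).
Proof.
  induction fs as [|f fs IH]; simpl.
  - unfold RI; simpl. repeat split; apply smooth_const.
  - apply (smat_mul (Mf (fst f) (snd f)) (PL fs)); auto. apply smat_Mf.
Qed.

Definition vdet (u v : R * R) : R := fst u * snd v - snd u * fst v.
Definition RMv (A : RM) (u : R * R) : R * R :=
  (r11 A * fst u + r12 A * snd u, r21 A * fst u + r22 A * snd u).

Lemma vdet_mul A u v : vdet (RMv A u) (RMv A v) = rdet A * vdet u v.
Proof. unfold vdet, RMv, rdet; simpl; ring. Qed.
Lemma RMv_mul A B u : RMv (RMmul A B) u = RMv A (RMv B u).
Proof. unfold RMv, RMmul; simpl; f_equal; ring. Qed.
Lemma RMv_add A B u : RMv (RMadd A B) u = (fst (RMv A u) + fst (RMv B u), snd (RMv A u) + snd (RMv B u)).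
Proof. unfold RMv, RMadd; simpl; f_equal; ring. Qed.
Lemma vdet_add u v w : vdet u (fst v + fst w, snd v + snd w) = vdet u v + vdet u w.
Proof. unfold vdet; simpl; ring. Qed.

Definition good (fs : list (R * R)) : Prop := Forall (fun f => fst f ^ 2 < 1 /\ 0 < snd f) fs.

Lemma det_PL fs s : rdet (PL fs s) = fold_right Rmult 1 (map (fun f => 1 - fst f ^ 2) fs).
Proof. induction fs; simpl. unfold rdet, RI; simpl; ring. rewrite rdet_mul, rdet_Mf, IHfs. auto. Qed.

Lemma det_PL_pos fs s : good fs -> 0 < rdet (PL fs s).
Proof.
  intros H. rewrite det_PL. induction H; simpl. lra.
  destruct H. apply Rmult_lt_0_compat; auto. lra.
Qed.

Lemma Mf_key c l s v : vdet (RMv (Mf c l s) v) (RMv (Mf1 c l s) v) = l * (1 - c ^ 2) * (fst v ^ 2 + snd v ^ 2).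
Proof.
  transitivity (l * (1 - c ^ 2) * (fst v ^ 2 + snd v ^ 2) * (sin (l * s) ^ 2 + cos (l * s) ^ 2)).
  - unfold vdet, RMv, Mf, Mf1, RMmul, RMscal, Dm, Rot, RotD; simpl. ring.
  - replace (sin (l*s)^2 + cos (l*s)^2) with 1 by (pose proof (sin2_cos2 (l*s)); unfold Rsqr in H; nra). ring.
Qed.

Lemma vnz (v : R * R) : v <> (0, 0) -> 0 < fst v ^ 2 + snd v ^ 2.
Proof.
  destruct v as [a b]; simpl; intro H.
  destruct (Req_EM_T a 0); destruct (Req_EM_T b 0); subst; try (exfalso; apply H; reflexivity); nra.
Qed.

Lemma RMv_nz A u : 0 < rdet A -> u <> (0,0) -> RMv A u <> (0,0).
Proof.
  intros Hd Hu E. apply Hu. destruct u as [a b]. unfold RMv, rdet in *; simpl in *.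
  injection E; intros E2 E1.
  assert (Ha : rdet A * a = 0) by (unfold rdet; replace (_ * a) with (r22 A * (r11 A * a + r12 A * b) - r12 A * (r21 A * a + r22 A * b)) by ring; rewrite E1, E2; ring).
  assert (Hb : rdet A * b = 0) by (unfold rdet; replace (_ * b) with (r11 A * (r21 A * a + r22 A * b) - r21 A * (r11 A * a + r12 A * b)) by ring; rewrite E1, E2; ring).
  unfold rdet in *. apply Rmult_integral in Ha; apply Rmult_integral in Hb.
  destruct Ha; [lra|]; destruct Hb; [lra|]. subst; auto.
Qed.

Lemma pos_weak fs s u : good fs -> 0 <= vdet (RMv (PL fs s) u) (RMv (PL1 fs s) u).
Proof.
  intros H. induction H as [|f fs [Hc Hl] Hfs IH]; simpl.
  - unfold vdet, RMv, RZ, RI; simpl. lra.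
  - rewrite !RMv_mul, RMv_add, vdet_add, !RMv_mul, vdet_mul, Mf_key.
    pose proof (det_PL_pos fs s Hfs). rewrite rdet_Mf.
    assert (0 <= fst (RMv (PL fs s) u) ^ 2 + snd (RMv (PL fs s) u) ^ 2) by nra.
    apply Rplus_le_le_0_compat. apply Rmult_le_pos; [|auto]. nra. apply Rmult_le_pos; [nra|auto].
Qed.

Lemma pos_strict fs s u : good fs -> fs <> [] -> u <> (0,0) -> 0 < vdet (RMv (PL fs s) u) (RMv (PL1 fs s) u).
Proof.
  intros H Hne Hu. destruct fs as [|f fs]; [contradiction|]. inversion H as [|? ? [Hc Hl] Hfs]; subst. simpl.
  rewrite !RMv_mul, RMv_add, vdet_add, !RMv_mul, vdet_mul, Mf_key.
  pose proof (det_PL_pos fs s Hfs). rewrite rdet_Mf.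
  pose proof (vnz _ (RMv_nz _ _ H0 Hu)). pose proof (pos_weak fs s u Hfs).
  apply Rplus_lt_le_0_compat. apply Rmult_lt_0_compat; [|auto]. nra. apply Rmult_le_pos; [nra|auto].
Qed.

Lemma RM_dec_eq (A B : RM) : {A = B} + {A <> B}.
Proof.
  destruct A as [a1 a2 a3 a4], B as [b1 b2 b3 b4].
  destruct (Req_EM_T a1 b1); [|right; intro E; injection E; intros; contradiction].
  destruct (Req_EM_T a2 b2); [|right; intro E; injection E; intros; contradiction].
  destruct (Req_EM_T a3 b3); [|right; intro E; injection E; intros; contradiction].
  destruct (Req_EM_T a4 b4); [|right; intro E; injection E; intros; contradiction].
  subst; auto.
Qed.

Definition d1 (A A' : RM) : R := r11 A' * r22 A + r11 A * r22 A' - r12 A' * r21 A - r12 A * r21 A'.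
Definition d2 (A A' A'' : RM) : R :=
  r11 A'' * r22 A + 2 * r11 A' * r22 A' + r11 A * r22 A'' -
  (r12 A'' * r21 A + 2 * r12 A' * r21 A' + r12 A * r21 A'').

Lemma dpl_minus f g x a b : derivable_pt_lim f x a -> derivable_pt_lim g x b ->
  derivable_pt_lim (fun z => f z - g z) x (a - b).
Proof.
  intros Ha Hb. apply (dpl_ext (fun z => f z + (-1) * g z)). intros; ring.
  eapply dpl_eq; [|apply dpl_plus; [exact Ha|apply dpl_mult; [apply dpl_const|exact Hb]]]. cbv beta; ring.
Qed.

Lemma det_deriv (A A' A'' : R -> RM) K : mder A A' -> mder A' A'' -> (forall y, rdet (A y) = K) ->
  forall y, d1 (A y) (A' y) = 0 /\ d2 (A y) (A' y) (A'' y) = 0.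
Proof.
  intros H1 H2 HK.
  assert (D1 : forall y, d1 (A y) (A' y) = 0).
  { intros y. destruct (H1 y) as [a1 [a2 [a3 a4]]].
    apply (uniqueness_limite (fun z => rdet (A z)) y).
    - unfold rdet. eapply dpl_eq; [|apply dpl_minus; apply dpl_mult; eauto].
      unfold d1; cbv beta; ring.
    - apply (dpl_ext (fun _ => K)). intros; rewrite HK; auto. apply dpl_const. }
  intros y. split; auto.
  destruct (H1 y) as [a1 [a2 [a3 a4]]]. destruct (H2 y) as [b1 [b2 [b3 b4]]].
  apply (uniqueness_limite (fun z => d1 (A z) (A' z)) y).
  - unfold d1. eapply dpl_eq.
    2:{ apply dpl_minus. apply dpl_minus. apply dpl_plus.
        apply dpl_mult; eauto. apply dpl_mult; eauto. apply dpl_mult; eauto. apply dpl_mult; eauto. }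
    unfold d2; cbv beta; ring.
  - apply (dpl_ext (fun _ => 0)). intros; rewrite D1; auto. apply dpl_const.
Qed.

Lemma parab (P Q : RM) s : s <> 0 -> rtr P = 2 * s -> rdet P = s * s -> P <> RMscal s RI ->
  d1 P Q = 0 -> (forall u, u <> (0,0) -> 0 < vdet (RMv P u) (RMv Q u)) -> rtr Q <> 0.
Proof.
  destruct P as [p11 p12 p21 p22], Q as [q11 q12 q21 q22].
  unfold rtr, rdet, d1, RMscal, RI, vdet, RMv; simpl. intros Hs HT HD HP D1 Hpos TQ.
  assert (E22 : p22 = 2 * s - p11) by lra. subst p22.
  destruct (Req_EM_T (p11 - s) 0) as [Ha|Ha]; [destruct (Req_EM_T p12 0) as [Hb|Hb]|].
  - assert (Hc : p21 <> 0).
    { intro Hc. apply HP. f_equal; lra. }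
    specialize (Hpos (0, 1)). simpl in Hpos.
    assert (Hq : p21 * q12 = 0).
    { replace p11 with s in D1 by lra. subst p12. nra. }
    apply Rmult_integral in Hq. destruct Hq as [Hq|Hq]; [contradiction|]. subst q12.
    assert (H0 : (0:R, 1:R) <> (0, 0)) by (intro E; injection E; lra).
    specialize (Hpos H0). nra.
  - set (a := p11 - s) in *. set (b := p12) in *. set (c := p21) in *.
    specialize (Hpos (b, - a)). simpl in Hpos.
    assert (H0 : (b, - a) <> (0, 0)) by (intro E; injection E; intros; contradiction).
    specialize (Hpos H0).
    assert (EV : forall D1e TQe Dtl,
      D1e = q11 * (2 * s - p11) + p11 * q22 - q12 * c - b * q21 ->
      TQe = q11 + q22 -> Dtl = p11 * (2 * s - p11) - b * c ->
      (p11 * b + b * - a) * (q21 * b + q22 * - a) - (c * b + (2 * s - p11) * - a) * (q11 * b + q12 * - a) =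
      s * (- b * D1e + b * s * TQe) + (Dtl - s * s) * (s * q12 + q11 * b - q12 * a)).
    { intros D1e TQe Dtl -> -> ->. unfold a. ring. }
    rewrite (EV _ _ _ eq_refl eq_refl eq_refl) in Hpos. rewrite D1, TQ, HD in Hpos. lra.
  - set (a := p11 - s) in *. set (b := p12) in *. set (c := p21) in *.
    specialize (Hpos (b, - a)). simpl in Hpos.
    assert (H0 : (b, - a) <> (0, 0)) by (intro E; injection E; intros; apply Ha; lra).
    specialize (Hpos H0).
    assert (EV : forall D1e TQe Dtl,
      D1e = q11 * (2 * s - p11) + p11 * q22 - q12 * c - b * q21 ->
      TQe = q11 + q22 -> Dtl = p11 * (2 * s - p11) - b * c ->
      (p11 * b + b * - a) * (q21 * b + q22 * - a) - (c * b + (2 * s - p11) * - a) * (q11 * b + q12 * - a) =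
      s * (- b * D1e + b * s * TQe) + (Dtl - s * s) * (s * q12 + q11 * b - q12 * a)).
    { intros D1e TQe Dtl -> -> ->. unfold a. ring. }
    rewrite (EV _ _ _ eq_refl eq_refl eq_refl) in Hpos. rewrite D1, TQ, HD in Hpos. lra.
Qed.

Lemma ident (Q Q2 : RM) s : s <> 0 -> d1 (RMscal s RI) Q = 0 -> d2 (RMscal s RI) Q Q2 = 0 ->
  (forall u, u <> (0,0) -> 0 < vdet (RMv (RMscal s RI) u) (RMv Q u)) -> rtr Q = 0 /\ rtr Q2 <> 0.
Proof.
  destruct Q as [q11 q12 q21 q22], Q2 as [w11 w12 w21 w22].
  unfold rtr, d1, d2, RMscal, RI, vdet, RMv; simpl. intros Hs D1 D2 Hpos.
  assert (TQ : q11 + q22 = 0).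
  { apply (Rmult_eq_reg_l s); auto. rewrite Rmult_0_r. rewrite <- D1. ring. }
  split; auto.
  assert (H1 := Hpos (1, 0)). simpl in H1.
  assert (H1' : 0 < s * q21).
  { assert (H0 : (1:R, 0:R) <> (0, 0)) by (intro E; injection E; lra). specialize (H1 H0). nra. }
  assert (Hq : q21 <> 0) by (intro; subst; nra).
  assert (H2 := Hpos (q11, q21)). simpl in H2.
  assert (H0 : (q11, q21) <> (0, 0)) by (intro E; injection E; intros; contradiction).
  specialize (H2 H0).
  assert (E2 : (s * 1 * q11 + s * 0 * q21) * (q21 * q11 + q22 * q21) - (s * 0 * q11 + s * 1 * q21) * (q11 * q11 + q12 * q21)
     = (s * q21) * (q11 * q22 - q12 * q21)) by ring.
  rewrite E2 in H2.
  assert (Hdet : 0 < q11 * q22 - q12 * q21).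
  { destruct (Rle_or_lt (q11 * q22 - q12 * q21) 0); auto. exfalso.
    assert ((s * q21) * (q11 * q22 - q12 * q21) <= 0) by nra. lra. }
  intro HW. 
  assert (E3 : s * (w11 + w22) = - 2 * (q11 * q22 - q12 * q21)).
  { replace (s * (w11 + w22)) with ((w11 * (s * 1) + 2 * q11 * q22 + s * 1 * w22 - (w12 * (s * 0) + 2 * q12 * q21 + s * 0 * w21)) - 2 * (q11 * q22 - q12 * q21)) by ring.
    rewrite D2. ring. }
  rewrite HW, Rmult_0_r in E3. lra.
Qed.

Lemma theta_exc k : (1 <= k)%nat -> theta (PI / (2 * INR k)) = INR k * PI.
Proof.
  intros Hk. unfold theta. assert (0 < INR k) by (apply lt_0_INR; lia).
  pose proof PI_RGT_0. field. split; lra.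
Qed.

Lemma cos_kPI k : (Nat.Even k -> cos (INR k * PI) = 1) /\ (Nat.Odd k -> cos (INR k * PI) = -1).
Proof.
  induction k.
  - simpl. rewrite Rmult_0_l, cos_0. split; auto. intros [m Hm]; lia.
  - rewrite S_INR. replace ((INR k + 1) * PI) with (INR k * PI + PI) by ring. rewrite neg_cos.
    destruct IHk as [H1 H2]. split; intro H.
    + apply Nat.Even_succ in H. rewrite H2; auto; ring.
    + apply Nat.Odd_succ in H. rewrite H1; auto; ring.
Qed.
Lemma sin_kPI k : sin (INR k * PI) = 0.
Proof.
  induction k. simpl. rewrite Rmult_0_l, sin_0; auto.
  rewrite S_INR. replace ((INR k + 1) * PI) with (INR k * PI + PI) by ring. rewrite neg_sin, IHk. ring.
Qed.

Lemma exc_props a : exceptional a ->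
  sth a = 0 /\ ((O_is_even a /\ cth a = 1) \/ (~ O_is_even a /\ cth a = -1)).
Proof.
  intros [k [Hk ->]]. unfold sth, cth. rewrite theta_exc by auto. split. apply sin_kPI.
  destruct (Nat.Even_or_Odd k) as [He|Ho].
  - left. split. exists k; auto. apply cos_kPI; auto.
  - right. split. 2: apply cos_kPI; auto.
    intros [k' [Hk' [E He]]].
    assert (INR k = INR k').
    { assert (0 < INR k) by (apply lt_0_INR; lia). assert (0 < INR k') by (apply lt_0_INR; lia).
      pose proof PI_RGT_0.
      assert (E' : PI * (2 * INR k') = PI * (2 * INR k)).
      { replace (PI * (2 * INR k')) with (PI / (2 * INR k) * (2 * INR k) * (2 * INR k')) by (field; lra).
        rewrite E. field. lra. }
      nra. }
    apply INR_eq in H. subst. apply (Nat.Even_Odd_False k'); auto.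
Qed.

Lemma sth_nz a : 0 < a < PI -> ~ exceptional a -> sth a <> 0.
Proof.
  intros Ha Hne Hs. apply Hne. unfold sth in Hs. apply sin_eq_0_0 in Hs. destruct Hs as [k Hk].
  unfold theta in Hk. pose proof PI_RGT_0.
  assert (Hpos : 0 < PI ^ 2 / (2 * a)) by (apply Rdiv_lt_0_compat; [apply pow_lt|]; lra).
  rewrite Hk in Hpos. assert (0 < IZR k) by nra. apply lt_0_IZR in H0.
  exists (Z.to_nat k). split. lia.
  rewrite INR_IZR_INZ, Z2Nat.id by lia.
  assert (E : PI ^ 2 = IZR k * PI * (2 * a)).
  { rewrite <- Hk. field. lra. }
  assert (0 < IZR k) by (apply IZR_lt; lia).
  apply (Rmult_eq_reg_r (2 * IZR k)). 2: lra.
  field_simplify; try lra. simpl in E. nra.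
Qed.

Lemma decP_true (P : Prop) : P -> decP P = true.
Proof. unfold decP. destruct (ClassicalDescription.excluded_middle_informative P); tauto. Qed.
Lemma decP_false (P : Prop) : ~ P -> decP P = false.
Proof. unfold decP. destruct (ClassicalDescription.excluded_middle_informative P); tauto. Qed.
Lemma decP_iff (P : Prop) : decP P = true <-> P.
Proof. unfold decP. destruct (ClassicalDescription.excluded_middle_informative P); split; intros; try tauto; discriminate. Qed.

Lemma prod1n_mul k f g : prod1n k f * prod1n k g = prod1n k (fun j => f j * g j).
Proof. induction k. unfold prod1n; simpl; ring. rewrite !prod1n_S, <- IHk. ring. Qed.

Lemma dpl_tr A A' K y : mder A A' ->
  derivable_pt_lim (fun z => rtr (A z) / 2 - K) y (rtr (A' y) / 2).
Proof.
  intros H. destruct (H y) as [a1 [a2 [a3 a4]]]. unfold rtr.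
  apply (dpl_ext (fun z => (/2) * (r11 (A z) + r22 (A z)) - K)). intros; unfold Rdiv; ring.
  eapply dpl_eq; [|apply dpl_minus; [apply dpl_mult; [apply dpl_const | apply dpl_plus; eauto]|apply dpl_const]].
  cbv beta; unfold Rdiv; ring.
Qed.

Lemma smooth_tr fs K : smooth (fun z => rtr (PL fs z) / 2 - K).
Proof.
  destruct (smat_PL fs) as [a1 [a2 [a3 a4]]]. unfold rtr.
  apply (smooth_ext (fun z => (/2) * (r11 (PL fs z) + r22 (PL fs z)) + (- K))). intros; unfold Rdiv; ring.
  apply smooth_plus. apply smooth_mult. apply smooth_const. apply smooth_plus; auto. apply smooth_const.
Qed.

Section NonExc.
Variables (n : nat) (alpha ell : nat -> R).
Hypothesis Hn : (1 <= n)%nat.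
Hypothesis Halpha : forall j, (1 <= j <= n)%nat -> 0 < alpha j < PI.
Hypothesis Hell : forall j, (1 <= j <= n)%nat -> 0 < ell j.

Local Notation al := (Defs.al n alpha).
Local Notation ll := (Defs.ll n ell).

Fixpoint pfac (k : nat) : list (R * R) :=
  match k with O => [] | S k' => (cth (al (S k')), ll (S k')) :: pfac k' end.

Lemma Pk_PL k s : Pk n alpha ell k s = PL (pfac k) s.
Proof. induction k; simpl; auto. rewrite IHk. auto. Qed.

Lemma cth_sq_lt a : sth a <> 0 -> cth a ^ 2 < 1.
Proof.
  intros H. unfold sth, cth in *. pose proof (sin2_cos2 (theta a)). unfold Rsqr in H0.
  assert (0 < sin (theta a) * sin (theta a)) by (apply Rsqr_pos_lt in H; unfold Rsqr in H; auto).
  simpl. lra.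
Qed.

Hypothesis Hne : ~ any_exceptional n alpha.

Lemma nexc j : (1 <= j <= n)%nat -> ~ exceptional (alpha j).
Proof. intros Hj He. apply Hne. exists j; auto. Qed.

Lemma sth_al_nz j : (1 <= j <= n)%nat -> sth (al j) <> 0.
Proof. intros Hj. rewrite al_id by auto. apply sth_nz; auto. apply nexc; auto. Qed.

Lemma good_pfac k : (k <= n)%nat -> good (pfac k).
Proof.
  induction k; intros Hk; simpl; constructor.
  - simpl. split. apply cth_sq_lt. apply sth_al_nz; lia. rewrite ll_id by lia. apply Hell; lia.
  - apply IHk; lia.
Qed.

Definition S0 : R := prod1n n (fun j => sin (theta (alpha j))).

Lemma detP s : rdet (Pk n alpha ell n s) = S0 * S0.
Proof.
  rewrite det_Pk. unfold S0. rewrite prod1n_mul. apply prod1n_ext. intros j Hj.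
  rewrite al_id by auto. unfold cth. pose proof (sin2_cos2 (theta (alpha j))). unfold Rsqr in H. simpl. lra.
Qed.

Lemma pinv_S0 : pinv n alpha n * S0 = 1.
Proof.
  unfold S0. rewrite (prod1n_ext n _ (fun j => sth (al j))).
  2:{ intros j Hj. rewrite al_id by auto. auto. }
  assert (forall k, (k <= n)%nat -> pinv n alpha k * prod1n k (fun j => sth (al j)) = 1).
  { induction k; intros Hk. simpl. unfold prod1n; simpl; ring.
    simpl pinv. rewrite prod1n_S. replace (/ sth (al (S k)) * pinv n alpha k * (prod1n k (fun j => sth (al j)) * sth (al (S k))))
      with ((pinv n alpha k * prod1n k (fun j => sth (al j))) * (/ sth (al (S k)) * sth (al (S k)))) by ring.
    rewrite IHk by lia. rewrite Rinv_l. ring. apply sth_al_nz; lia. }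
  apply H; lia.
Qed.

Lemma S0_nz : S0 <> 0.
Proof. intro E. pose proof pinv_S0. rewrite E in H. lra. Qed.

Definition Ymat (s : R) : RM := RMscal (pinv n alpha n) (Pk n alpha ell n s).

Lemma Tmat_Y s : Tmat n alpha ell s = emb (Ymat s).
Proof. unfold Tmat, Ymat. rewrite Tpart_eq, Mscal_emb. auto. Qed.

Lemma detY s : rdet (Ymat s) = 1.
Proof.
  unfold Ymat. replace (rdet (RMscal (pinv n alpha n) (Pk n alpha ell n s))) with
    (pinv n alpha n * pinv n alpha n * rdet (Pk n alpha ell n s)) by (unfold rdet, RMscal; simpl; ring).
  rewrite detP. replace (pinv n alpha n * pinv n alpha n * (S0 * S0)) with ((pinv n alpha n * S0) * (pinv n alpha n * S0)) by ring.
  rewrite pinv_S0. ring.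
Qed.

Lemma trY s : rtr (Ymat s) = 2 <-> rtr (Pk n alpha ell n s) = 2 * S0.
Proof.
  unfold Ymat. replace (rtr (RMscal (pinv n alpha n) (Pk n alpha ell n s))) with
    (pinv n alpha n * rtr (Pk n alpha ell n s)) by (unfold rtr, RMscal; simpl; ring).
  pose proof pinv_S0. pose proof S0_nz. split; intro H1.
  - apply (Rmult_eq_reg_l (pinv n alpha n)). 2:{ intro E; rewrite E in H; lra. }
    rewrite H1. replace (pinv n alpha n * (2 * S0)) with (2 * (pinv n alpha n * S0)) by ring. rewrite H. ring.
  - rewrite H1. replace (pinv n alpha n * (2 * S0)) with (2 * (pinv n alpha n * S0)) by ring. rewrite H. ring.
Qed.

Lemma FP_nexc s : FP n alpha ell s = rtr (PL (pfac n) s) / 2 - S0.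
Proof. rewrite FP_eq by auto. rewrite Pk_PL. auto. Qed.

Lemma QE_iff s : 0 <= s -> (quasi_eigenvalue n alpha ell s <-> FP n alpha ell s = 0).
Proof.
  intros Hs. unfold quasi_eigenvalue. rewrite FP_nexc, <- Pk_PL.
  split.
  - intros [_ [[_ He]|[Ha _]]]; [|contradiction].
    rewrite Tmat_Y, eig_iff in He by apply detY. apply trY in He. rewrite He. lra.
  - intro H. split; auto. left. split; auto. rewrite Tmat_Y, eig_iff by apply detY. apply trY. lra.
Qed.

Lemma pfac_ne : pfac n <> [].
Proof. destruct n; [lia|]. simpl; discriminate. Qed.

Lemma dets fs : (forall y, rdet (PL fs y) = S0 * S0) ->
  forall y, d1 (PL fs y) (PL1 fs y) = 0 /\ d2 (PL fs y) (PL1 fs y) (PL2 fs y) = 0.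
Proof. intros H. apply (det_deriv (PL fs) (PL1 fs) (PL2 fs) (S0 * S0)); auto using mder_PL, mder_PL1. Qed.

Lemma detPL y : rdet (PL (pfac n) y) = S0 * S0.
Proof. rewrite <- Pk_PL. apply detP. Qed.

Lemma root2 s : PL (pfac n) s = RMscal S0 RI -> root_mult (FP n alpha ell) s 2.
Proof.
  intros HP. destruct (dets _ detPL s) as [D1 D2]. rewrite HP in D1, D2.
  assert (Hpos : forall u, u <> (0,0) -> 0 < vdet (RMv (RMscal S0 RI) u) (RMv (PL1 (pfac n) s) u)).
  { intros u Hu. rewrite <- HP. apply pos_strict; auto. apply good_pfac; lia. apply pfac_ne. }
  destruct (ident _ _ _ S0_nz D1 D2 Hpos) as [T1 T2].
  apply (root_mult_2 _ (fun z => rtr (PL1 (pfac n) z) / 2 - 0) s (rtr (PL2 (pfac n) s) / 2)).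
  - apply (smooth_ext (fun z => rtr (PL (pfac n) z) / 2 - S0)). intros; rewrite FP_nexc; auto. apply smooth_tr.
  - intros y. apply (dpl_ext (fun z => rtr (PL (pfac n) z) / 2 - S0)). intros; rewrite FP_nexc; auto.
    eapply dpl_eq; [|apply dpl_tr; apply mder_PL]. ring.
  - rewrite FP_nexc, HP. unfold rtr, RMscal, RI; simpl. field.
  - rewrite T1. field.
  - apply dpl_tr. apply mder_PL1.
  - lra.
Qed.

Lemma root1 s : FP n alpha ell s = 0 -> PL (pfac n) s <> RMscal S0 RI -> root_mult (FP n alpha ell) s 1.
Proof.
  intros HF HP. destruct (dets _ detPL s) as [D1 _].
  assert (Hpos : forall u, u <> (0,0) -> 0 < vdet (RMv (PL (pfac n) s) u) (RMv (PL1 (pfac n) s) u)).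
  { intros u Hu. apply pos_strict; auto. apply good_pfac; lia. apply pfac_ne. }
  assert (HT : rtr (PL (pfac n) s) = 2 * S0) by (rewrite FP_nexc in HF; lra).
  pose proof (parab _ _ _ S0_nz HT (detPL s) HP D1 Hpos).
  apply (root_mult_1 _ s (rtr (PL1 (pfac n) s) / 2)); auto.
  - apply (smooth_ext (fun z => rtr (PL (pfac n) z) / 2 - S0)). intros; rewrite FP_nexc; auto. apply smooth_tr.
  - apply (dpl_ext (fun z => rtr (PL (pfac n) z) / 2 - S0)). intros; rewrite FP_nexc; auto.
    apply dpl_tr; apply mder_PL.
  - lra.
Qed.

Lemma Y_RI s : PL (pfac n) s = RMscal S0 RI -> Ymat s = RI.
Proof.
  intros H. unfold Ymat. rewrite Pk_PL, H. pose proof pinv_S0.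
  apply RM_eq; unfold RMscal, RI; simpl; rewrite ?Rmult_0_r, ?Rmult_1_r; auto; ring_simplify; auto.
Qed.

Lemma Y_nRI s : PL (pfac n) s <> RMscal S0 RI -> Ymat s <> RI.
Proof.
  intros H E. apply H. unfold Ymat in E. rewrite Pk_PL in E. pose proof pinv_S0. pose proof S0_nz.
  assert (Hp : pinv n alpha n <> 0) by (intro Z; rewrite Z in H0; lra).
  assert (E1 := f_equal r11 E). assert (E2 := f_equal r12 E).
  assert (E3 := f_equal r21 E). assert (E4 := f_equal r22 E).
  destruct (PL (pfac n) s) as [a b c d]. unfold RMscal, RI in *; simpl in *.
  f_equal; apply (Rmult_eq_reg_l (pinv n alpha n)); auto; try rewrite E1; try rewrite E2; try rewrite E3;
  try rewrite E4; nra.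
Qed.

Lemma mult_pos s m : 0 < s -> quasi_eigenvalue n alpha ell s ->
  (qe_mult_pos n alpha ell s m <-> root_mult (FP n alpha ell) s m).
Proof.
  intros Hs HQ. assert (HF : FP n alpha ell s = 0) by (apply QE_iff; auto; lra).
  assert (HT : rtr (Pk n alpha ell n s) = 2 * S0) by (rewrite FP_nexc in HF; rewrite Pk_PL; lra).
  unfold qe_mult_pos.
  assert (Hg : forall g, geom_mult_1 (Tmat n alpha ell s) g -> root_mult (FP n alpha ell) s g ->
     ((~ any_exceptional n alpha /\ geom_mult_1 (Tmat n alpha ell s) m) \/
      (any_exceptional n alpha /\ m = length (filter (fun E => decP (kappa_cond n alpha ell E s)) (seq 1 n)))
      <-> root_mult (FP n alpha ell) s m)).
  { intros g G R. split.
    - intros [[_ G']|[Ha _]]; [|contradiction]. rewrite (geom_unique _ _ _ G' G). auto.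
    - intros R'. left. split; auto. rewrite (root_mult_unique _ _ _ _ R' R). auto. }
  destruct (RM_dec_eq (PL (pfac n) s) (RMscal S0 RI)) as [E|E].
  - apply (Hg 2%nat). rewrite Tmat_Y, Y_RI by auto. apply geom_I. apply root2; auto.
  - apply (Hg 1%nat). rewrite Tmat_Y. apply geom_par. apply detY. apply trY; auto. apply Y_nRI; auto.
    apply root1; auto.
Qed.

Lemma PL_0 fs : r12 (PL fs 0) = 0 /\ r21 (PL fs 0) = 0.
Proof.
  induction fs as [|f fs IH]; simpl. unfold RI; simpl; auto.
  destruct IH as [H1 H2]. unfold RMmul, Mf, Dm, Rot; simpl. rewrite Rmult_0_r, cos_0, sin_0, H1, H2. split; ring.
Qed.

Lemma mult_zero : quasi_eigenvalue n alpha ell 0 ->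
  forall m, (root_mult (FP n alpha ell) 0 m <-> INR m = 2 * qe_mult_zero n alpha).
Proof.
  intros HQ m. unfold qe_mult_zero. rewrite decP_false by auto.
  assert (HF : FP n alpha ell 0 = 0) by (apply QE_iff; auto; lra).
  assert (HP : PL (pfac n) 0 = RMscal S0 RI).
  { rewrite FP_nexc in HF. pose proof (detPL 0). destruct (PL_0 (pfac n)) as [H1 H2].
    destruct (PL (pfac n) 0) as [a b c d]. unfold rtr, rdet, RMscal, RI in *; simpl in *. subst.
    assert ((a - d) * (a - d) = 0) by nra. assert (a = d) by nra. f_equal; nra. }
  pose proof (root2 0 HP). split.
  - intros R. rewrite (root_mult_unique _ _ _ _ R H). simpl. ring.
  - intros E. assert (m = 2%nat). { apply INR_eq. rewrite E. simpl. ring. } subst. auto.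
Qed.

End NonExc.

Section Walk.
Variables (n : nat) (alpha ell : nat -> R).
Hypothesis Hn : (1 <= n)%nat.

Local Notation al := (Defs.al n alpha).
Local Notation ll := (Defs.ll n ell).

Definition pr (j : nat) : nat := wrap n (j - 1).

Lemma pr_gt1 y : (2 <= y <= n)%nat -> pr y = (y - 1)%nat.
Proof. intros H. unfold pr. apply wrap_id; lia. Qed.
Lemma pr_1 : pr 1 = n.
Proof. unfold pr. simpl. apply wrap_0; auto. Qed.

Lemma iter_pr_lt d y : (1 <= y <= n)%nat -> (d < y)%nat -> Nat.iter d pr y = (y - d)%nat.
Proof.
  induction d; intros Hy Hd; simpl. lia.
  rewrite IHd by lia. rewrite pr_gt1 by lia. lia.
Qed.

Lemma iter_pr_ge e y : (1 <= y <= n)%nat -> (e < n)%nat -> Nat.iter (e + y) pr y = (n - e)%nat.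
Proof.
  intros Hy He. rewrite Nat.iter_add.
  assert (Nat.iter y pr y = n).
  { destruct y as [|y]; [lia|]. simpl. rewrite iter_pr_lt by lia. replace (S y - y)%nat with 1%nat by lia. apply pr_1. }
  rewrite H. apply iter_pr_lt; lia.
Qed.

Lemma iter_range d y : (1 <= y <= n)%nat -> (1 <= Nat.iter d pr y <= n)%nat.
Proof. induction d; simpl; intros; auto. unfold pr. apply wrap_range; auto. Qed.

Lemma reach y x : (1 <= y <= n)%nat -> (1 <= x <= n)%nat ->
  exists d, (d <= n - 1)%nat /\ Nat.iter d pr y = x /\
    ((y < n)%nat -> x <> S y -> (d <= n - 2)%nat) /\ (y = n -> x <> 1%nat -> (d <= n - 2)%nat).
Proof.
  intros Hy Hx. destruct (le_lt_dec x y) as [Hle|Hlt].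
  - exists (y - x)%nat. split. lia. split. rewrite iter_pr_lt by lia. lia. split; intros; lia.
  - exists (n - x + y)%nat. split. lia. split.
    + rewrite iter_pr_ge by lia. lia.
    + split; intros; lia.
Qed.

Fixpoint bfac (f j : nat) : list (R * R) :=
  match f with
  | O => []
  | S f' => if excb (al j) then [] else (cth (al j), ll j) :: bfac f' (pr j)
  end.

Lemma bfac_fuel f y : (exists d, (d <= f)%nat /\ excb (al (Nat.iter d pr y)) = true) ->
  bfac f y = bfac (S f) y.
Proof.
  revert y; induction f; intros y [d [Hd He]].
  - assert (d = O) by lia. subst. simpl in *. rewrite He. auto.
  - change (bfac (S (S f)) y) with (if excb (al y) then [] else (cth (al y), ll y) :: bfac (S f) (pr y)).
    change (bfac (S f) y) with (if excb (al y) then [] else (cth (al y), ll y) :: bfac f (pr y)).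
    destruct (excb (al y)) eqn:Ey; auto. f_equal. apply IHf.
    destruct d as [|d]. simpl in He. congruence.
    exists d. split. lia. rewrite <- He. simpl. rewrite <- Nat.iter_succ_r. auto.
Qed.

Lemma prevE_fuel f y : (exists d, (d <= f)%nat /\ excb (al (Nat.iter d pr y)) = true) ->
  prevE n alpha f y = prevE n alpha (S f) y.
Proof.
  revert y; induction f; intros y [d [Hd He]].
  - assert (d = O) by lia. subst. simpl in *. rewrite He. auto.
  - change (prevE n alpha (S (S f)) y) with (if excb (al y) then y else prevE n alpha (S f) (pr y)).
    change (prevE n alpha (S f) y) with (if excb (al y) then y else prevE n alpha f (pr y)).
    destruct (excb (al y)) eqn:Ey; auto. apply IHf.
    destruct d as [|d]. simpl in He. congruence.
    exists d. split. lia. rewrite <- He. simpl. rewrite <- Nat.iter_succ_r. auto.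
Qed.

Lemma prevE_first f d y : (d <= f)%nat -> excb (al (Nat.iter d pr y)) = true ->
  (forall d', (d' < d)%nat -> excb (al (Nat.iter d' pr y)) = false) ->
  prevE n alpha f y = Nat.iter d pr y.
Proof.
  revert f y; induction d; intros f y Hd He Hb.
  - simpl in *. destruct f; simpl; auto. rewrite He. auto.
  - destruct f as [|f]; [lia|].
    change (prevE n alpha (S f) y) with (if excb (al y) then y else prevE n alpha f (pr y)).
    assert (E0 : excb (al y) = false) by (apply (Hb O); lia). rewrite E0.
    rewrite Nat.iter_succ_r. apply IHd. lia.
    rewrite <- Nat.iter_succ_r. auto.
    intros d' Hd'. rewrite <- Nat.iter_succ_r. apply Hb. lia.
Qed.

End Walk.

Lemma decP_f (P : Prop) : decP P = false -> ~ P.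
Proof. intros H HP. rewrite decP_true in H; auto. discriminate. Qed.

Definition bsel (a : R) : bool := decP (O_is_even a).
Definition ev (b : bool) : R * R := if b then (1, 0) else (0, 1).
Definition comp (b : bool) (v : R * R) : R := if b then fst v else snd v.
Definition vsc (c : R) (v : R * R) : R * R := (c * fst v, c * snd v).
Definition prodL {T} (L : list T) (f : T -> R) : R := fold_right Rmult 1 (map f L).

Lemma prodL_app {T} (L1 L2 : list T) f : prodL (L1 ++ L2) f = prodL L1 f * prodL L2 f.
Proof. unfold prodL. rewrite map_app. induction L1; simpl; [ring|]. rewrite IHL1; ring. Qed.

Lemma ent_comp b b' Y : ent b b' Y = comp b (RMv Y (ev b')).
Proof. destruct b, b'; unfold ent, comp, RMv, ev; simpl; ring. Qed.
Lemma RMv_vsc A c v : RMv A (vsc c v) = vsc c (RMv A v).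
Proof. unfold RMv, vsc; simpl; f_equal; ring. Qed.
Lemma RMv_I v : RMv RI v = v.
Proof. destruct v; unfold RMv, RI; simpl; f_equal; ring. Qed.
Lemma vsc_1 v : vsc 1 v = v.
Proof. destruct v; unfold vsc; simpl; f_equal; ring. Qed.
Lemma vsc_vsc a b v : vsc a (vsc b v) = vsc (a * b) v.
Proof. unfold vsc; simpl; f_equal; ring. Qed.
Lemma comp_vsc b c v : comp b (vsc c v) = c * comp b v.
Proof. destruct b; unfold comp, vsc; simpl; ring. Qed.

Lemma Mf0 l s : Mf 0 l s = Rot (l * s).
Proof. apply RM_eq; unfold Mf, RMmul, Dm, Rot; simpl; ring. Qed.

Lemma bsel_cth a : exceptional a -> cth a = if bsel a then 1 else -1.
Proof.
  intros H. destruct (exc_props a H) as [_ [[He Hc]|[He Hc]]]; unfold bsel.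
  - rewrite decP_true; auto.
  - rewrite decP_false; auto.
Qed.

Lemma Mf_exc a l s w : exceptional a ->
  RMv (Mf (cth a) l s) w = vsc (2 * comp (bsel a) (RMv (Rot (l * s)) w)) (ev (bsel a)).
Proof.
  intros H. rewrite (bsel_cth a H). destruct (bsel a); unfold RMv, Mf, RMmul, Dm, Rot, vsc, comp, ev; simpl; f_equal; ring.
Qed.

Lemma tr_exc a l s X : exceptional a ->
  rtr (RMmul (Mf (cth a) l s) X) = 2 * comp (bsel a) (RMv (RMmul (Rot (l * s)) X) (ev (bsel a))).
Proof.
  intros H. rewrite (bsel_cth a H). destruct (bsel a); unfold rtr, RMv, Mf, RMmul, Dm, Rot, comp, ev; simpl; ring.
Qed.

Section Exc.
Variables (n : nat) (alpha ell : nat -> R).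
Hypothesis Hn : (1 <= n)%nat.
Hypothesis Halpha : forall j, (1 <= j <= n)%nat -> 0 < alpha j < PI.
Hypothesis Hell : forall j, (1 <= j <= n)%nat -> 0 < ell j.
Hypothesis Hany : any_exceptional n alpha.

Local Notation al := (Defs.al n alpha).
Local Notation ll := (Defs.ll n ell).
Local Notation bfac := (bfac n alpha ell).
Local Notation pr := (pr n).

Lemma al_range j : 0 < al j < PI.
Proof. unfold Defs.al. apply Halpha. apply wrap_range; auto. Qed.
Lemma ll_pos j : 0 < ll j.
Proof. unfold Defs.ll. apply Hell. apply wrap_range; auto. Qed.

Lemma excb_iff j : (1 <= j <= n)%nat -> (excb (al j) = true <-> exceptional (alpha j)).
Proof. intros Hj. unfold excb. rewrite decP_iff. rewrite al_id; auto. tauto. Qed.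
Lemma excb_false j : (1 <= j <= n)%nat -> ~ exceptional (alpha j) -> excb (al j) = false.
Proof. intros Hj H. unfold excb. apply decP_false. rewrite al_id; auto. Qed.

Lemma good_bfac f j : good (bfac f j).
Proof.
  revert j; induction f; intros j; simpl. constructor.
  destruct (excb (al j)) eqn:E. constructor. constructor; [|apply IHf]. simpl. split.
  - apply cth_sq_lt. apply sth_nz. apply al_range. intro Hx. unfold excb in E.
    rewrite decP_true in E; auto. discriminate.
  - apply ll_pos.
Qed.

Lemma back_eq f j s : exists c, c <> 0 /\ back n alpha ell f j s = Mscal c (emb (PL (bfac f j) s)).
Proof.
  revert j; induction f; intros j.
  - exists 1. split. lra. simpl. rewrite emb_I, Mscal_1. auto.
  - simpl. destruct (excb (al j)) eqn:E.
    + exists 1. split. lra. simpl. rewrite emb_I, Mscal_1. auto.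
    + destruct (IHf (wrap n (j - 1))) as [c [Hc Hb]]. exists (/ sth (al j) * c). split.
      * apply Rmult_integral_contrapositive. split; auto. apply Rinv_neq_0_compat.
        apply sth_nz. apply al_range. intro Hx. unfold excb in E. rewrite decP_true in E; auto. discriminate.
      * rewrite Hb. rewrite Amat_eq, Mmul_scal_l, AB_emb, Mmul_scal_l, Mmul_scal_r, emb_mul, Mscal_scal.
        simpl. auto.
Qed.

Definition ufac (E : nat) : list (R * R) := (0, ll E) :: bfac (n - 1) (wrap n (E - 1)).
Definition gE (E : nat) (s : R) : R :=
  ent (bsel (alpha E)) (bsel (al (prev_exc n alpha E))) (PL (ufac E) s).

Lemma Umat_eq E s : exists c, c <> 0 /\ Umat n alpha ell E s = Mscal c (emb (PL (ufac E) s)).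
Proof.
  destruct (back_eq (n - 1) (wrap n (E - 1)) s) as [c [Hc Hb]]. exists c. split; auto.
  unfold Umat. rewrite Hb, B_emb, Mmul_scal_r, emb_mul. unfold ufac. simpl. rewrite Mf0. auto.
Qed.

Lemma kappa_iff E s : (1 <= E <= n)%nat ->
  (kappa_cond n alpha ell E s <-> exceptional (alpha E) /\ gE E s = 0).
Proof.
  intros HE. unfold kappa_cond. destruct (Umat_eq E s) as [c [Hc HU]]. rewrite HU.
  replace (Xof (al (prev_exc n alpha E))) with (Xb (bsel (al (prev_exc n alpha E)))) by reflexivity.
  replace (Xof (alpha E)) with (Xb (bsel (alpha E))) by reflexivity.
  rewrite cdot_emb. fold (gE E s). split.
  - intros [H1 H2]. split; auto. apply (f_equal fst) in H2. simpl in H2.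
    apply Rmult_integral in H2. destruct H2; auto. contradiction.
  - intros [H1 H2]. split; auto. rewrite H2. unfold C0. f_equal. ring.
Qed.

Lemma max_exc : exists Es, (1 <= Es <= n)%nat /\ exceptional (alpha Es) /\
  (forall j, (Es < j <= n)%nat -> ~ exceptional (alpha j)).
Proof.
  assert (Hm : forall m, (exists j, (1 <= j <= m)%nat /\ exceptional (alpha j)) ->
    exists Es, (1 <= Es <= m)%nat /\ exceptional (alpha Es) /\ (forall j, (Es < j <= m)%nat -> ~ exceptional (alpha j))).
  { induction m; intros [j [Hj Hx]]. lia.
    destruct (ClassicalDescription.excluded_middle_informative (exceptional (alpha (S m)))) as [E|E].
    - exists (S m). split. lia. split; auto. intros; lia.
    - destruct IHm as [Es [H1 [H2 H3]]].
      + exists j. split; auto. destruct (Nat.eq_dec j (S m)); [subst; contradiction|lia].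
      + exists Es. split. lia. split; auto. intros j' Hj'. destruct (Nat.eq_dec j' (S m)). subst; auto. apply H3; lia. }
  destruct Hany as [j [Hj Hx]]. destruct (Hm n) as [Es H]. exists j; auto. exists Es. exact H.
Qed.

Definition Back (k : nat) (s : R) : RM := PL (bfac (n - 1) (wrap n k)) s.
Definition pe (k : nat) : nat := prevE n alpha (n - 1) (wrap n k).

Lemma bfac_exc f j : excb (al j) = true -> bfac f j = [].
Proof. intros H. destruct f; simpl; auto. rewrite H. auto. Qed.
Lemma prevE_exc f j : excb (al j) = true -> prevE n alpha f j = j.
Proof. intros H. destruct f; simpl; auto. rewrite H. auto. Qed.

Lemma NS k x : (k < n)%nat -> ~ exceptional (alpha (S k)) -> (1 <= x <= n)%nat -> exceptional (alpha x) ->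
  x <> S k ->
  bfac (n - 1) (wrap n (S k)) = (cth (al (S k)), ll (S k)) :: bfac (n - 1) (wrap n k) /\
  pe (S k) = pe k.
Proof.
  intros Hk Hne Hx Hex Hxk.
  assert (Hn2 : (2 <= n)%nat) by lia.
  rewrite (wrap_id n (S k)) by lia.
  assert (Ey : (1 <= wrap n k <= n)%nat) by (apply wrap_range; auto).
  assert (Hd : exists d, (d <= n - 2)%nat /\ excb (al (Nat.iter d pr (wrap n k))) = true).
  { destruct (reach n Hn (wrap n k) x Ey Hx) as [d [Hd1 [Hd2 [Hd3 Hd4]]]].
    exists d. split.
    - destruct k as [|k].
      + rewrite wrap_0 in * by auto. apply Hd4; auto.
      + rewrite wrap_id in * by lia. apply Hd3; auto; lia.
    - rewrite Hd2. apply excb_iff; auto. }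
  replace (n - 1)%nat with (S (n - 2)) by lia.
  assert (Ek : excb (al (S k)) = false) by (apply excb_false; auto; lia).
  assert (Epr : pr (S k) = wrap n k) by (unfold pr; f_equal; lia).
  split.
  - simpl. rewrite Ek. f_equal. rewrite Epr. apply bfac_fuel; auto.
  - unfold pe. replace (n - 1)%nat with (S (n - 2)) by lia. rewrite (wrap_id n (S k)) by lia.
    change (prevE n alpha (S (n-2)) (S k)) with (if excb (al (S k)) then S k else prevE n alpha (n-2) (pr (S k))).
    rewrite Ek, Epr. apply prevE_fuel; auto.
Qed.

Definition Lexc (k : nat) : list nat := filter (fun j => excb (al j)) (seq 1 k).

Section WithMax.
Variable Es : nat.
Hypothesis HEs : (1 <= Es <= n)%nat.
Hypothesis HxEs : exceptional (alpha Es).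
Hypothesis Hmax : forall j, (Es < j <= n)%nat -> ~ exceptional (alpha j).

Lemma pe0 : pe 0 = Es.
Proof.
  unfold pe. rewrite wrap_0 by auto.
  assert (Hit : Nat.iter (n - Es) pr n = Es) by (rewrite iter_pr_lt by lia; lia).
  rewrite (prevE_first n alpha Hn (n - 1) (n - Es)); auto. lia.
  rewrite Hit. apply excb_iff; auto.
  intros d' Hd'. rewrite iter_pr_lt by lia. apply excb_false. lia. apply Hmax. lia.
Qed.

Lemma invariant k s : (k < Es)%nat ->
  RMv (Pk n alpha ell k s) (RMv (Back 0 s) (ev (bsel (al (pe 0))))) =
  vsc (prodL (Lexc k) (fun j => 2 * gE j s)) (RMv (Back k s) (ev (bsel (al (pe k))))).
Proof.
  induction k; intros Hk.
  - simpl. rewrite RMv_I. unfold Lexc, prodL; simpl. rewrite vsc_1. auto.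
  - change (Pk n alpha ell (S k) s) with (RMmul (Mf (cth (al (S k))) (ll (S k)) s) (Pk n alpha ell k s)).
    rewrite RMv_mul, IHk by lia. rewrite RMv_vsc.
    assert (HL : Lexc (S k) = Lexc k ++ (if excb (al (S k)) then [S k] else [])).
    { unfold Lexc. rewrite seq_S, filter_app. simpl. destruct (excb (al (S k))); auto. }
    rewrite HL. destruct (excb (al (S k))) eqn:E.
    + assert (Hx : exceptional (al (S k))). { apply (proj1 (decP_iff _)). exact E. }
      rewrite Mf_exc by auto. rewrite prodL_app.
      change (prodL [S k] (fun j => 2 * gE j s)) with (2 * gE (S k) s * 1).
      assert (HB : Back (S k) s = RI).
      { unfold Back. rewrite (wrap_id n (S k)) by lia. rewrite bfac_exc by auto. auto. }
      assert (HP : pe (S k) = S k).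
      { unfold pe. rewrite (wrap_id n (S k)) by lia. apply prevE_exc; auto. }
      rewrite HB, HP, RMv_I, vsc_vsc.
      f_equal. unfold gE. rewrite <- (al_id n alpha (S k)) by lia.
      replace (prev_exc n alpha (S k)) with (pe k) by (unfold prev_exc, pe; f_equal; f_equal; lia).
      rewrite ent_comp. unfold ufac. simpl PL. rewrite Mf0. rewrite RMv_mul.
      rewrite ?Nat.sub_0_r. replace (wrap n (S k - 1)) with (wrap n k) by (f_equal; lia). fold (Back k s). ring.
    + rewrite app_nil_r. f_equal.
      assert (Hne : ~ exceptional (alpha (S k))).
      { intro Hx. apply (excb_iff (S k)) in Hx. congruence. lia. }
      destruct (NS k Es ltac:(lia) Hne HEs HxEs ltac:(lia)) as [H1 H2].
      rewrite H2. unfold Back at 2. rewrite H1. simpl. rewrite RMv_mul. auto.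
Qed.

Lemma Pk_Back d s : (Es + d <= n)%nat ->
  Pk n alpha ell (Es + d) s = RMmul (Back (Es + d) s) (Pk n alpha ell Es s).
Proof.
  induction d; intros Hd.
  - rewrite Nat.add_0_r. unfold Back. rewrite (wrap_id n Es) by auto.
    rewrite bfac_exc. simpl. rewrite RMmul_I_l. auto. apply excb_iff; auto.
  - replace (Es + S d)%nat with (S (Es + d)) by lia.
    assert (Hne : ~ exceptional (alpha (S (Es + d)))) by (apply Hmax; lia).
    destruct (NS (Es + d) Es ltac:(lia) Hne HEs HxEs ltac:(lia)) as [H1 _].
    change (Pk n alpha ell (S (Es + d)) s) with
      (RMmul (Mf (cth (al (S (Es + d)))) (ll (S (Es + d))) s) (Pk n alpha ell (Es + d) s)).
    rewrite IHd by lia. unfold Back at 2. rewrite H1. simpl. rewrite RMmul_assoc. auto.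
Qed.

Lemma filter_nil_f {T} (f : T -> bool) L : (forall x, In x L -> f x = false) -> filter f L = [].
Proof. induction L; simpl; intros H; auto. rewrite H by auto. apply IHL; auto. Qed.

Lemma trace_fact s : rtr (Pk n alpha ell n s) = prodL (Lexc n) (fun j => 2 * gE j s).
Proof.
  replace (Pk n alpha ell n s) with (Pk n alpha ell (Es + (n - Es)) s) by (f_equal; lia).
  rewrite Pk_Back by lia.
  replace (Back (Es + (n - Es)) s) with (Back n s) by (f_equal; lia).
  rewrite rtr_comm.
  replace (Pk n alpha ell Es s) with (RMmul (Mf (cth (al Es)) (ll Es) s) (Pk n alpha ell (Es - 1) s)).
  2:{ destruct Es as [|e]; [lia|]. simpl. rewrite Nat.sub_0_r. auto. }
  rewrite <- RMmul_assoc.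
  assert (Hx : exceptional (al Es)) by (rewrite al_id; auto).
  rewrite tr_exc by auto. rewrite !RMv_mul.
  replace (Back n s) with (Back 0 s) by (unfold Back; rewrite wrap_0, (wrap_id n n) by lia; auto).
  replace (al Es) with (al (pe 0)) at 2 by (rewrite pe0; auto).
  rewrite invariant by lia. rewrite RMv_vsc, comp_vsc.
  assert (HL : Lexc n = Lexc (Es - 1) ++ [Es]).
  { unfold Lexc. replace (seq 1 n) with (seq 1 (Es + (n - Es))) by (f_equal; lia). rewrite seq_app, filter_app.
    rewrite (filter_nil_f _ (seq (1 + Es) (n - Es))).
    2:{ intros x Hx'. apply in_seq in Hx'. apply excb_false. lia. apply Hmax. lia. }
    replace Es with (S (Es - 1)) at 1 by lia. rewrite seq_S, filter_app. simpl.
    replace (S (Es - 1)) with Es by lia. rewrite (proj2 (excb_iff Es HEs) HxEs). rewrite app_nil_r. auto. }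
  rewrite HL, prodL_app. change (prodL [Es] (fun j => 2 * gE j s)) with (2 * gE Es s * 1).
  unfold gE. rewrite <- (al_id n alpha Es) by auto. rewrite ent_comp. unfold ufac. simpl PL.
  rewrite Mf0, RMv_mul. fold (Back (Es - 1) s).
  replace (prev_exc n alpha Es) with (pe (Es - 1)) by reflexivity. ring.
Qed.
End WithMax.

Lemma prod1n_zero k f j : (1 <= j <= k)%nat -> f j = 0 -> prod1n k f = 0.
Proof.
  induction k; intros Hj Hf. lia. rewrite prod1n_S. destruct (Nat.eq_dec j (S k)).
  - subst. rewrite Hf. ring.
  - rewrite (IHk ltac:(lia) Hf). ring.
Qed.

Lemma FP_exc s : FP n alpha ell s = prodL (Lexc n) (fun j => 2 * gE j s) / 2.
Proof.
  destruct max_exc as [Es [H1 [H2 H3]]].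
  rewrite FP_eq by auto. rewrite (trace_fact Es H1 H2 H3).
  rewrite (prod1n_zero n _ Es) by (auto; destruct (exc_props _ H2) as [Hs _]; exact Hs). ring.
Qed.

Lemma smooth_ent b b' fs : smooth (fun y => 2 * ent b b' (PL fs y)).
Proof.
  destruct (smat_PL fs) as [a1 [a2 [a3 a4]]]. apply smooth_mult. apply smooth_const.
  destruct b, b'; simpl; auto.
Qed.
Lemma dpl_ent b b' fs y : derivable_pt_lim (fun z => 2 * ent b b' (PL fs z)) y (2 * ent b b' (PL1 fs y)).
Proof.
  destruct (mder_PL fs y) as [a1 [a2 [a3 a4]]].
  destruct b, b'; simpl; (eapply dpl_eq; [|apply dpl_mult; [apply dpl_const|eauto]]); cbv beta; ring.
Qed.

Lemma good_ufac E : good (ufac E).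
Proof. unfold ufac. constructor. simpl. split. lra. apply ll_pos. apply good_bfac. Qed.

Lemma gE_simple E y : gE E y = 0 -> ent (bsel (alpha E)) (bsel (al (prev_exc n alpha E))) (PL1 (ufac E) y) <> 0.
Proof.
  unfold gE. set (b := bsel (alpha E)). set (b' := bsel (al (prev_exc n alpha E))). intros H0 H1.
  assert (Hp := pos_strict (ufac E) y (ev b') (good_ufac E) ltac:(unfold ufac; discriminate)
     ltac:(destruct b'; unfold ev; intro Z; injection Z; intros; lra)).
  rewrite ent_comp in H0, H1. unfold vdet in Hp.
  destruct b; unfold comp in *; rewrite H0, H1 in Hp; lra.
Qed.

Definition ordE (E : nat) (y : R) : nat := if decP (gE E y = 0) then 1%nat else 0%nat.

Lemma gE_order E y : root_mult (fun z => 2 * gE E z) y (ordE E y).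
Proof.
  unfold ordE. destruct (decP (gE E y = 0)) eqn:D.
  - apply (proj1 (decP_iff _)) in D. apply (root_mult_1 _ y (2 * ent (bsel (alpha E)) (bsel (al (prev_exc n alpha E))) (PL1 (ufac E) y))).
    apply smooth_ent. rewrite D; ring. apply dpl_ent.
    pose proof (gE_simple E y D). lra.
  - apply root_mult_0. apply smooth_ent. intro Z. assert (gE E y = 0) by lra.
    apply (decP_f _ D); auto.
Qed.

Definition cnt (L : list nat) (y : R) : nat := fold_right plus 0%nat (map (fun E => ordE E y) L).

Lemma root_mult_prodL L y : root_mult (fun z => prodL L (fun j => 2 * gE j z) / 2) y (cnt L y).
Proof.
  induction L as [|E L IH].
  - unfold prodL, cnt; simpl. apply root_mult_0. apply smooth_const. lra.
  - unfold cnt; simpl. fold (cnt L y).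
    apply (root_mult_ext (fun z => (2 * gE E z) * (prodL L (fun j => 2 * gE j z) / 2))).
    { intros z. unfold prodL; simpl. unfold Rdiv; ring. }
    apply root_mult_mult. apply gE_order. auto.
Qed.

Lemma prodL_zero {T} (L : list T) f : prodL L f = 0 <-> exists x, In x L /\ f x = 0.
Proof.
  induction L as [|a L IH]; unfold prodL in *; simpl.
  - split. lra. intros [x [[] _]].
  - split.
    + intro H. apply Rmult_integral in H. destruct H as [H|H]. exists a; auto.
      apply IH in H. destruct H as [x [Hx Hf]]. exists x; auto.
    + intros [x [[<-|Hx] Hf]]. rewrite Hf; ring. assert (fold_right Rmult 1 (map f L) = 0) by (apply IH; eauto).
      rewrite H; ring.
Qed.

Lemma in_Lexc j : In j (Lexc n) <-> (1 <= j <= n)%nat /\ exceptional (alpha j).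
Proof.
  unfold Lexc. rewrite filter_In, in_seq. split.
  - intros [H1 H2]. split. lia. apply excb_iff; auto. lia.
  - intros [H1 H2]. split. lia. apply excb_iff; auto.
Qed.

Lemma QE_iff_exc s : 0 <= s -> (quasi_eigenvalue n alpha ell s <-> FP n alpha ell s = 0).
Proof.
  intros Hs. unfold quasi_eigenvalue. rewrite FP_exc.
  assert (E1 : prodL (Lexc n) (fun j => 2 * gE j s) / 2 = 0 <-> prodL (Lexc n) (fun j => 2 * gE j s) = 0) by (split; intro; lra).
  rewrite E1, prodL_zero. split.
  - intros [_ [[Hna _]|[_ [E [HE Hk]]]]]. contradiction.
    apply kappa_iff in Hk; auto. destruct Hk as [Hx Hg]. exists E. split. apply in_Lexc; auto. rewrite Hg; ring.
  - intros [E [HE Hg]]. apply in_Lexc in HE. split; auto. right. split; auto. exists E. split. tauto.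
    apply kappa_iff. tauto. split. tauto. lra.
Qed.

Lemma cnt_cons x L y : cnt (x :: L) y = (ordE x y + cnt L y)%nat.
Proof. reflexivity. Qed.

Lemma count_kappa s L : (forall E, In E L -> (1 <= E <= n)%nat) ->
  length (filter (fun E => decP (kappa_cond n alpha ell E s)) L) = cnt (filter (fun j => excb (al j)) L) s.
Proof.
  induction L as [|x L IH]; intros HL; simpl; auto.
  assert (Hx : (1 <= x <= n)%nat) by (apply HL; simpl; auto).
  specialize (IH ltac:(intros; apply HL; simpl; auto)).
  destruct (excb (al x)) eqn:Ex.
  - rewrite cnt_cons. unfold ordE at 1.
    destruct (decP (gE x s = 0)) eqn:Dg.
    + rewrite decP_true. simpl. rewrite IH. auto. apply kappa_iff; auto. split.
      apply excb_iff; auto. apply (proj1 (decP_iff _)); auto.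
    + rewrite decP_false. simpl. rewrite IH. auto. intro Hk. apply kappa_iff in Hk; auto. destruct Hk as [_ Hk].
      apply (decP_f _ Dg); auto.
  - rewrite decP_false. auto. intro Hk. apply kappa_iff in Hk; auto. destruct Hk as [Hk _].
    apply excb_iff in Hk; auto. congruence.
Qed.

Lemma mult_pos_exc s m : (qe_mult_pos n alpha ell s m <-> root_mult (FP n alpha ell) s m).
Proof.
  unfold qe_mult_pos.
  assert (R := root_mult_prodL (Lexc n) s).
  apply (root_mult_ext _ (FP n alpha ell)) in R. 2:{ intros; rewrite FP_exc; auto. }
  rewrite (count_kappa s (seq 1 n)) by (intros E HE; apply in_seq in HE; lia). fold (Lexc n).
  split.
  - intros [[Hna _]|[_ Hm]]. contradiction. subst; auto.
  - intros R'. right. split; auto. apply (root_mult_unique _ _ _ _ R' R).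
Qed.

Lemma ent_diag b b' X : r12 X = 0 -> r21 X = 0 -> r11 X <> 0 -> r22 X <> 0 -> (ent b b' X = 0 <-> b <> b').
Proof. intros H1 H2 H3 H4. destruct b, b'; simpl; split; intros; try congruence; try contradiction; auto. Qed.

Lemma decP_neq (A B : Prop) : decP A <> decP B <-> ~ (A <-> B).
Proof.
  unfold decP. destruct (ClassicalDescription.excluded_middle_informative A);
  destruct (ClassicalDescription.excluded_middle_informative B); split; intros; try tauto; try congruence.
Qed.

Lemma gE_zero E : (1 <= E <= n)%nat -> exceptional (alpha E) ->
  (gE E 0 = 0 <-> ~ (O_is_even (al (prev_exc n alpha E)) <-> O_is_even (alpha E))).
Proof.
  intros HE Hx. unfold gE.
  destruct (PL_0 (ufac E)) as [H12 H21].
  pose proof (det_PL_pos (ufac E) 0 (good_ufac E)) as Hd. unfold rdet in Hd. rewrite H12, H21 in Hd.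
  rewrite ent_diag; auto. 2,3: intro Z; rewrite Z in Hd; lra.
  unfold bsel. rewrite decP_neq. split; intros H1 H2; apply H1; tauto.
Qed.

Lemma count_zero L : (forall E, In E L -> (1 <= E <= n)%nat) ->
  length (filter (fun E => decP (exceptional (alpha E) /\
             ~ (O_is_even (al (prev_exc n alpha E)) <-> O_is_even (alpha E)))) L) =
  cnt (filter (fun j => excb (al j)) L) 0.
Proof.
  induction L as [|x L IH]; intros HL; simpl; auto.
  assert (Hx : (1 <= x <= n)%nat) by (apply HL; simpl; auto).
  specialize (IH ltac:(intros; apply HL; simpl; auto)).
  destruct (excb (al x)) eqn:Ex.
  - assert (Hxx : exceptional (alpha x)) by (apply excb_iff; auto).
    rewrite cnt_cons. unfold ordE at 1.
    destruct (decP (gE x 0 = 0)) eqn:Dg.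
    + apply (proj1 (decP_iff _)) in Dg. rewrite decP_true. simpl. rewrite IH. auto.
      split; auto. apply gE_zero; auto.
    + rewrite decP_false. simpl. rewrite IH. auto. intros [_ Hk]. apply gE_zero in Hk; auto.
      apply (decP_f _ Dg); auto.
  - rewrite decP_false. auto. intros [Hk _]. apply excb_iff in Hk; auto. congruence.
Qed.

Lemma mult_zero_exc m : (root_mult (FP n alpha ell) 0 m <-> INR m = 2 * qe_mult_zero n alpha).
Proof.
  assert (R := root_mult_prodL (Lexc n) 0).
  apply (root_mult_ext _ (FP n alpha ell)) in R. 2:{ intros; rewrite FP_exc; auto. }
  unfold qe_mult_zero. rewrite decP_true by auto.
  rewrite count_zero by (intros E HE; apply in_seq in HE; lia). fold (Lexc n).
  split.
  - intros R'. rewrite (root_mult_unique _ _ _ _ R' R). field.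
  - intros E. assert (m = cnt (Lexc n) 0). { apply INR_eq. rewrite E. field. } subst; auto.
Qed.

End Exc.


Theorem theorem2p11 (n : nat) (alpha ell : nat -> R)
  (Hn : (1 <= n)%nat)
  (Halpha : forall j, (1 <= j <= n)%nat -> 0 < alpha j < PI)
  (Hell : forall j, (1 <= j <= n)%nat -> 0 < ell j) :
  (forall sigma, 0 <= sigma ->
     (quasi_eigenvalue n alpha ell sigma <-> FP n alpha ell sigma = 0)) /\
  (forall sigma m, 0 < sigma -> quasi_eigenvalue n alpha ell sigma ->
     (qe_mult_pos n alpha ell sigma m <-> root_mult (FP n alpha ell) sigma m)) /\
  (quasi_eigenvalue n alpha ell 0 ->
     forall m, (root_mult (FP n alpha ell) 0 m <-> INR m = 2 * qe_mult_zero n alpha)).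
Proof.
  destruct (ClassicalDescription.excluded_middle_informative (any_exceptional n alpha)) as [Ha|Hne].
  - split; [|split].
    + intros s Hs. apply QE_iff_exc; auto.
    + intros s m Hs HQ. apply mult_pos_exc; auto.
    + intros HQ m. apply mult_zero_exc; auto.
  - split; [|split].
    + intros s Hs. apply QE_iff; auto.
    + intros s m Hs HQ. apply mult_pos; auto.
    + intros HQ m. apply mult_zero; auto.
Qed.
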